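(* Let $\mathcal{G}=\langle\mathcal{Q},\mathbf{f}\rangle$ be a monotone NEP satisfying also Assumption 2, with nonempty set of Nash equilibria. Let $\tau>0$ be such that, for every $\mathbf{y}\in\mathbb{R}^n$, the matrix $\boldsymbol{\Upsilon}_{\mathbf{F}_{\tau,\mathbf{y}}}$ is a P-matrix. Then for every $\mathbf{y}$ the game $\mathcal{G}_{\tau,\mathbf{y}}$ has a unique NE $\mathbf{S}_\tau(\mathbf{y})$, and for every $\mathbf{x}^{(0)}\in\mathcal{Q}$ the sequence $\mathbf{x}^{(n+1)}=\mathbf{S}_\tau(\mathbf{x}^{(n)})$ converges to a NE of $\mathcal{G}$.
   Context: Real NEP: player $i$ chooses $\mathbf{x}_i\in\mathcal{Q}_i\subseteq\mathbb{R}^{n_i}$ minimizing $f_i(\mathbf{x}_i,\mathbf{x}_{-i})$; $\mathcal{Q}=\prod_i\mathcal{Q}_i$, $n=\sum n_i$. NE: $\mathbf{x}^\star\in\mathcal{Q}$ with $f_i(\mathbf{x}^\star_i,\mathbf{x}^\star_{-i})\le f_i(\mathbf{x}_i,\mathbf{x}^\star_{-i})$ for all $\mathbf{x}_i\in\mathcal{Q}_i$, all $i$. Assumption 1: $\mathcal{Q}_i$ nonempty closed convex, $f_i$ continuously differentiable on $\mathcal{Q}$, convex in $\mathbf{x}_i$. Assumption 2: $f_i$ twice continuously differentiable with bounded derivatives on $\mathcal{Q}$. Monotone NEP: Assumption 1 holds and $\mathbf{F}(\mathbf{x})=(\nabla_{\mathbf{x}_i}f_i(\mathbf{x}))_i$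 is monotone on $\mathcal{Q}$. $\mathcal{G}_{\tau,\mathbf{y}}$: the game in which player $i$ minimizes $f_i(\mathbf{x}_i,\mathbf{x}_{-i})+\frac\tau2\|\mathbf{x}_i-\mathbf{y}_i\|^2$ over $\mathcal{Q}_i$; its gradient map is $\mathbf{F}_{\tau,\mathbf{y}}(\mathbf{x})=\mathbf{F}(\mathbf{x})+\tau(\mathbf{x}-\mathbf{y})$. For a partitioned map $\mathbf{G}=(\mathbf{G}_i)_i$, $\boldsymbol{\Upsilon}_{\mathbf{G}}$ is the $I\times I$ matrix with diagonal $\inf_{\mathbf{x}\in\mathcal{Q}}\lambda_{\rm least}(\mathbf{J}_i\mathbf{G}_i(\mathbf{x}))$ and off-diagonal entries $-\sup_{\mathbf{x}\in\mathcal{Q}}\|\mathbf{J}_j\mathbf{G}_i(\mathbf{x})\|_2$, with $\mathbf{J}_j$ the Jacobian w.r.t. $\mathbf{x}_j$ and $\lambda_{\rm least}(\mathbf{A})$ the smallest eigenvalue of $(\mathbf{A}+\mathbf{A}^T)/2$. P-matrix: all principal minors positive. *)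

(* Defs.v *)
From Stdlib Require Import Reals Lra Lia Classical ClassicalEpsilon Sorting.Sorted List.
Open Scope R_scope.

(* ---------- Finite-dimensional vectors ----------
   A vector of R^d is represented by a function v : nat -> R which vanishes
   at all indices >= d (predicate [supp d v]). *)

Definition vec := nat -> R.

Definition supp (d : nat) (v : vec) : Prop := forall k, (d <= k)%nat -> v k = 0.

Fixpoint rsum (d : nat) (g : nat -> R) : R :=
  match d with O => 0 | S d' => rsum d' g + g d' end.

Definition vnorm (d : nat) (v : vec) : R := sqrt (rsum d (fun k => v k ^ 2)).

Definition vsub (u v : vec) : vec := fun k => u k - v k.

Definition shift (x : vec) (k : nat) (t : R) : vec :=
  fun m => if Nat.eqb m k then x m + t else x m.

Definition has_pd (h : vec -> R) (x : vec) (k : nat) (l : R) : Prop :=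
  derivable_pt_lim (fun t => h (shift x k t)) 0 l.

Definition ex_pd (h : vec -> R) (x : vec) (k : nat) : Prop := exists l, has_pd h x k l.

(* the partial derivative d h / d x_k at x (meaningful when it exists) *)
Definition pd (h : vec -> R) (x : vec) (k : nat) : R :=
  epsilon (inhabits 0) (fun l => has_pd h x k l).

Definition open_in (n : nat) (U : vec -> Prop) : Prop :=
  forall x, U x -> exists del, 0 < del /\
    forall z, supp n z -> vnorm n (vsub z x) < del -> U z.

Definition cont_on (n : nat) (U : vec -> Prop) (h : vec -> R) : Prop :=
  forall x, U x -> forall eps, 0 < eps -> exists del, 0 < del /\
    forall z, supp n z -> U z -> vnorm n (vsub z x) < del -> Rabs (h z - h x) < eps.

Definition C2_on (n : nat) (U : vec -> Prop) (h : vec -> R) : Prop :=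
  cont_on n U h /\
  (forall k, (k < n)%nat ->
     (forall x, U x -> ex_pd h x k) /\ cont_on n U (fun z => pd h z k)) /\
  (forall k l, (k < n)%nat -> (l < n)%nat ->
     (forall x, U x -> ex_pd (fun z => pd h z k) x l) /\
     cont_on n U (fun z => pd (fun w => pd h w k) z l)).

Definition nonemptyQ (d : nat) (P : vec -> Prop) : Prop := exists v, supp d v /\ P v.

Definition closedQ (d : nat) (P : vec -> Prop) : Prop :=
  forall v, supp d v -> ~ P v -> exists del, 0 < del /\
    forall w, supp d w -> vnorm d (vsub w v) < del -> ~ P w.

Definition convexQ (d : nat) (P : vec -> Prop) : Prop :=
  forall u v t, supp d u -> supp d v -> P u -> P v -> 0 <= t <= 1 ->
    P (fun k => t * u k + (1 - t) * v k).

(* ---------- Games ----------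
   I players; player i has n_i = ni i variables; the full vector x in R^n,
   n = sum_i n_i, stores block i at indices off ni i, ..., off ni i + ni i - 1. *)

Fixpoint off (ni : nat -> nat) (i : nat) : nat :=
  match i with O => O | S i' => (off ni i' + ni i')%nat end.

Definition ntot (I : nat) (ni : nat -> nat) : nat := off ni I.

Definition blk (ni : nat -> nat) (x : vec) (i : nat) : vec :=
  fun r => if Nat.ltb r (ni i) then x (off ni i + r)%nat else 0.

(* (v, x_{-i}) : replace block i of x by v *)
Definition upd (ni : nat -> nat) (x : vec) (i : nat) (v : vec) : vec :=
  fun k => if andb (Nat.leb (off ni i) k) (Nat.ltb k (off ni i + ni i)) then v (k - off ni i)%nat
           else x k.

Definition inQ (I : nat) (ni : nat -> nat) (Qi : nat -> vec -> Prop) (x : vec) : Prop :=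
  supp (ntot I ni) x /\ forall i, (i < I)%nat -> Qi i (blk ni x i).

Definition is_NE (I : nat) (ni : nat -> nat) (Qi : nat -> vec -> Prop)
  (f : nat -> vec -> R) (x : vec) : Prop :=
  inQ I ni Qi x /\
  forall i, (i < I)%nat -> forall v, supp (ni i) v -> Qi i v ->
    f i x <= f i (upd ni x i v).

Definition fprox (ni : nat -> nat) (f : nat -> vec -> R) (tau : R) (y : vec)
  (i : nat) (x : vec) : R :=
  f i x + tau / 2 * rsum (ni i) (fun r => (x (off ni i + r)%nat - y (off ni i + r)%nat) ^ 2).

(* partitioned maps G = (G_i)_i : G i x r is the r-th component of G_i(x) *)
Definition pmap := nat -> vec -> nat -> R.

Definition Fgrad (ni : nat -> nat) (f : nat -> vec -> R) : pmap :=
  fun i x r => pd (f i) x (off ni i + r)%nat.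

Definition Ftau (ni : nat -> nat) (F : pmap) (tau : R) (y : vec) : pmap :=
  fun i x r => F i x r + tau * (x (off ni i + r)%nat - y (off ni i + r)%nat).

Definition monotone_on (I : nat) (ni : nat -> nat) (Qi : nat -> vec -> Prop) (F : pmap) : Prop :=
  forall x z, inQ I ni Qi x -> inQ I ni Qi z ->
    0 <= rsum I (fun i => rsum (ni i) (fun r =>
           (F i x r - F i z r) * (x (off ni i + r)%nat - z (off ni i + r)%nat))).

Definition mat := nat -> nat -> R.

Definition Jac (ni : nat -> nat) (G : pmap) (i j : nat) (x : vec) : mat :=
  fun r c => pd (fun z => G i z r) x (off ni j + c)%nat.

Definition symm (A : mat) : mat := fun r c => (A r c + A c r) / 2.

Definition matvec (d : nat) (A : mat) (v : vec) : vec := fun r => rsum d (fun c => A r c * v c).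

Definition is_eig (d : nat) (S : mat) (l : R) : Prop :=
  exists v, supp d v /\ (exists k, (k < d)%nat /\ v k <> 0) /\
    forall r, (r < d)%nat -> matvec d S v r = l * v r.

Definition lambda_least (d : nat) (A : mat) (t : R) : Prop :=
  is_eig d (symm A) t /\ forall mu, is_eig d (symm A) mu -> t <= mu.

Definition is_inf (E : R -> Prop) (m : R) : Prop :=
  (forall t, E t -> m <= t) /\ (forall b, (forall t, E t -> b <= t) -> b <= m).

Definition opnorm2 (m d : nat) (A : mat) (t : R) : Prop :=
  is_lub (fun s => exists v, supp d v /\ vnorm d v = 1 /\ s = vnorm m (matvec d A v)) t.

Definition is_Upsilon (I : nat) (ni : nat -> nat) (Qi : nat -> vec -> Prop) (G : pmap)
  (M : mat) : Prop :=
  (forall i, (i < I)%nat ->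
     is_inf (fun t => exists x, inQ I ni Qi x /\ lambda_least (ni i) (Jac ni G i i x) t) (M i i)) /\
  (forall i j, (i < I)%nat -> (j < I)%nat -> i <> j ->
     is_lub (fun t => exists x, inQ I ni Qi x /\ opnorm2 (ni i) (ni j) (Jac ni G i j x) t)
            (- M i j)).

Definition minor0 (A : mat) (c : nat) : mat :=
  fun r s => A (S r) (if Nat.ltb s c then s else S s).

Fixpoint det (d : nat) (A : mat) : R :=
  match d with
  | O => 1
  | S d' => rsum d (fun c => (-1) ^ c * A 0%nat c * det d' (minor0 A c))
  end.

Definition subm (A : mat) (l : list nat) : mat :=
  fun r s => A (List.nth r l 0%nat) (List.nth s l 0%nat).

Definition P_matrix (I : nat) (M : mat) : Prop :=
  forall l : list nat, l <> nil -> Sorted.StronglySorted lt l ->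
    (forall k, List.In k l -> (k < I)%nat) ->
    0 < det (length l) (subm M l).

Definition converges_to (n : nat) (xs : nat -> vec) (xl : vec) : Prop :=
  forall eps, 0 < eps -> exists N, forall m, (N <= m)%nat -> vnorm n (vsub (xs m) xl) < eps.

(* Main.v *)
Require Import Defs.
From Stdlib Require Import Reals Lra Lia Psatz Classical ClassicalEpsilon FunctionalExtensionality.
Open Scope R_scope.

Lemma rsum_ext d g h : (forall k, (k < d)%nat -> g k = h k) -> rsum d g = rsum d h.
Proof. induction d; simpl; intros H; auto. rewrite IHd by (intros; apply H; lia). rewrite H by lia; auto. Qed.

Lemma rsum_plus d g h : rsum d (fun k => g k + h k) = rsum d g + rsum d h.
Proof. induction d; simpl; [lra|]. rewrite IHd; lra. Qed.

Lemma rsum_scal d c g : rsum d (fun k => c * g k) = c * rsum d g.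
Proof. induction d; simpl; [lra|]. rewrite IHd; lra. Qed.

Lemma rsum_opp d g : rsum d (fun k => - g k) = - rsum d g.
Proof. induction d; simpl; [lra|]. rewrite IHd; lra. Qed.

Lemma rsum_minus d g h : rsum d (fun k => g k - h k) = rsum d g - rsum d h.
Proof. induction d; simpl; [lra|]. rewrite IHd; lra. Qed.

Lemma rsum_zero d g : (forall k, (k < d)%nat -> g k = 0) -> rsum d g = 0.
Proof. induction d; simpl; intros H; auto. rewrite IHd by (intros; apply H; lia). rewrite (H d) by lia. lra. Qed.

Lemma rsum_le d g h : (forall k, (k < d)%nat -> g k <= h k) -> rsum d g <= rsum d h.
Proof. induction d; simpl; intros H; [lra|]. assert (g d <= h d) by (apply H; lia).
  assert (rsum d g <= rsum d h) by (apply IHd; intros; apply H; lia). lra. Qed.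

Lemma rsum_nonneg d g : (forall k, (k < d)%nat -> 0 <= g k) -> 0 <= rsum d g.
Proof. intros H. replace 0 with (rsum d (fun _ => 0)). apply rsum_le; auto. apply rsum_zero; auto. Qed.

Lemma rsum_term_le d g k : (forall k, (k < d)%nat -> 0 <= g k) -> (k < d)%nat -> g k <= rsum d g.
Proof. induction d; simpl; intros H Hk; [lia|].
  assert (0 <= rsum d g) by (apply rsum_nonneg; intros; apply H; lia).
  destruct (Nat.eq_dec k d). subst; lra.
  assert (g k <= rsum d g) by (apply IHd; [intros; apply H|]; lia). assert (0 <= g d) by (apply H; lia). lra. Qed.

Lemma rsum_add a b g : rsum (a + b) g = rsum a g + rsum b (fun r => g (a + r)%nat).
Proof. induction b; simpl. rewrite Nat.add_0_r; lra. rewrite Nat.add_succ_r; simpl. rewrite IHb; lra. Qed.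

Lemma rsum_single d g i : (i < d)%nat -> (forall j, (j < d)%nat -> j <> i -> g j = 0) -> rsum d g = g i.
Proof. induction d; simpl; intros Hi H; [lia|].
  destruct (Nat.eq_dec i d). subst. rewrite rsum_zero. lra. intros; apply H; lia.
  rewrite IHd by (try lia; intros; apply H; lia). rewrite (H d) by lia. lra. Qed.

Lemma rsum_abs d g : Rabs (rsum d g) <= rsum d (fun k => Rabs (g k)).
Proof. induction d; simpl. rewrite Rabs_R0; lra. eapply Rle_trans. apply Rabs_triang. lra. Qed.

Lemma rsum_const d c : rsum d (fun _ => c) = INR d * c.
Proof. induction d; cbn [rsum]; [simpl; lra|]. rewrite IHd, S_INR. lra. Qed.

Lemma rsum_sq_le d g : (rsum d g)^2 <= INR d * rsum d (fun k => g k ^ 2).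
Proof. induction d; cbn [rsum]. simpl; lra.
  assert (H2 : forall k, (k < d)%nat -> 2 * g k * g d <= g k ^ 2 + g d ^ 2) by (intros k _; pose proof (pow2_ge_0 (g k - g d)); nra).
  assert (H3 : 2 * rsum d g * g d <= rsum d (fun k => g k ^ 2) + INR d * g d ^2).
  { replace (2 * rsum d g * g d) with (rsum d (fun k => 2 * g k * g d)).
    2:{ rewrite (rsum_ext d _ (fun k => (2 * g d) * g k)) by (intros; ring). rewrite rsum_scal; ring. }
    replace (INR d * g d ^ 2) with (rsum d (fun _ => g d ^ 2)).
    2:{ apply rsum_const. }
    rewrite <- rsum_plus. apply rsum_le; auto. }
  rewrite S_INR. nra. Qed.

Definition nsq (d : nat) (v : vec) : R := rsum d (fun k => v k ^ 2).
Definition ip (d : nat) (u v : vec) : R := rsum d (fun k => u k * v k).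

Lemma nsq_nonneg d v : 0 <= nsq d v.
Proof. apply rsum_nonneg; intros; nra. Qed.

Lemma vnorm_nsq d v : vnorm d v = sqrt (nsq d v).
Proof. reflexivity. Qed.

Lemma vnorm_lt_iff d v del : 0 < del -> (vnorm d v < del <-> nsq d v < del ^ 2).
Proof. intros Hd. rewrite vnorm_nsq. pose proof (nsq_nonneg d v). split; intros H'.
  - pose proof (sqrt_pos (nsq d v)). rewrite <- (Rsqr_sqrt (nsq d v)) by lra. unfold Rsqr; nra.
  - rewrite <- (sqrt_pow2 del) by lra. apply sqrt_lt_1_alt. lra. Qed.

Lemma coord_le_nsq d v k : (k < d)%nat -> v k ^ 2 <= nsq d v.
Proof. intros; unfold nsq. apply (rsum_term_le d (fun k => v k ^ 2)); auto; intros; nra. Qed.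

Lemma abs_le_of_sq a b : 0 <= b -> a ^ 2 <= b ^ 2 -> Rabs a <= b.
Proof. intros. apply Rsqr_le_abs_1 in H0 || idtac. unfold Rabs; destruct (Rcase_abs a); nra. Qed.
Lemma off_mono ni j i : (j < i)%nat -> (off ni j + ni j <= off ni i)%nat.
Proof. induction i; intros H; [lia|]. simpl. destruct (Nat.eq_dec j i). subst; lia. specialize (IHi ltac:(lia)); lia. Qed.

Lemma off_le ni j i : (j <= i)%nat -> (off ni j <= off ni i)%nat.
Proof. intros H. destruct (Nat.eq_dec j i). subst; lia. pose proof (off_mono ni j i); lia. Qed.

Lemma off_ntot I ni i : (i < I)%nat -> (off ni i + ni i <= ntot I ni)%nat.
Proof. intros; apply off_mono; auto. Qed.

Lemma rsum_blocks I ni g : rsum (ntot I ni) g = rsum I (fun i => rsum (ni i) (fun r => g (off ni i + r)%nat)).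
Proof. induction I; simpl; auto. unfold ntot in *; simpl. rewrite rsum_add, IHI; auto. Qed.

Lemma blk_eq ni x i r : (r < ni i)%nat -> blk ni x i r = x (off ni i + r)%nat.
Proof. intros H; unfold blk. destruct (Nat.ltb_spec r (ni i)); auto; lia. Qed.

Lemma upd_in ni x i v r : (r < ni i)%nat -> upd ni x i v (off ni i + r)%nat = v r.
Proof. intros H; unfold upd. destruct (Nat.leb_spec (off ni i) (off ni i + r)); destruct (Nat.ltb_spec (off ni i + r) (off ni i + ni i)); simpl; try lia. f_equal; lia. Qed.

Lemma upd_out ni x i v k : ((k < off ni i) \/ (off ni i + ni i <= k))%nat -> upd ni x i v k = x k.
Proof. intros H; unfold upd. destruct (Nat.leb_spec (off ni i) k); destruct (Nat.ltb_spec k (off ni i + ni i)); simpl; auto; lia. Qed.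

Lemma upd_other ni x i v j r : j <> i -> (r < ni j)%nat -> upd ni x i v (off ni j + r)%nat = x (off ni j + r)%nat.
Proof. intros H Hr. apply upd_out. destruct (Nat.lt_ge_cases j i).
  - pose proof (off_mono ni j i H0); lia.
  - assert (i < j)%nat by lia. pose proof (off_mono ni i j H1); lia. Qed.

Definition inb (ni : nat -> nat) (i k : nat) : bool := andb (Nat.leb (off ni i) k) (Nat.ltb k (off ni i + ni i)).

Definition asm (I : nat) (ni : nat -> nat) (w : nat -> nat -> R) : vec :=
  fun k => rsum I (fun i => if inb ni i k then w i (k - off ni i)%nat else 0).

Lemma inb_true ni i r : (r < ni i)%nat -> inb ni i (off ni i + r) = true.
Proof. intros; unfold inb. destruct (Nat.leb_spec (off ni i) (off ni i + r)); destruct (Nat.ltb_spec (off ni i + r) (off ni i + ni i)); simpl; auto; lia. Qed.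

Lemma inb_false ni i j r : j <> i -> (r < ni j)%nat -> inb ni i (off ni j + r) = false.
Proof. intros H Hr. unfold inb. destruct (Nat.lt_ge_cases j i).
  - pose proof (off_mono ni j i H0). destruct (Nat.leb_spec (off ni i) (off ni j + r)); simpl; auto; lia.
  - assert (i < j)%nat by lia. pose proof (off_mono ni i j H1).
    destruct (Nat.leb_spec (off ni i) (off ni j + r)); destruct (Nat.ltb_spec (off ni j + r) (off ni i + ni i)); simpl; auto; lia. Qed.

Lemma asm_at I ni w i r : (i < I)%nat -> (r < ni i)%nat -> asm I ni w (off ni i + r)%nat = w i r.
Proof. intros Hi Hr. unfold asm. rewrite (rsum_single I _ i Hi).
  - rewrite inb_true by auto. f_equal; lia.
  - intros j Hj Hji. rewrite inb_false; auto. Qed.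

Lemma asm_supp I ni w : supp (ntot I ni) (asm I ni w).
Proof. intros k Hk. unfold asm. apply rsum_zero. intros i Hi. pose proof (off_ntot I ni i Hi).
  unfold inb. destruct (Nat.leb_spec (off ni i) k); destruct (Nat.ltb_spec k (off ni i + ni i)); simpl; auto; lia. Qed.

Lemma blocks_asm I ni w (g : nat -> R -> R) :
  rsum (ntot I ni) (fun k => g k (asm I ni w k)) = rsum I (fun i => rsum (ni i) (fun r => g (off ni i + r)%nat (w i r))).
Proof. rewrite rsum_blocks. apply rsum_ext; intros i Hi. apply rsum_ext; intros r Hr. rewrite asm_at; auto. Qed.

Lemma rsum_blockonly I ni i g : (i < I)%nat ->
  (forall j r, (j < I)%nat -> j <> i -> (r < ni j)%nat -> g (off ni j + r)%nat = 0) ->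
  rsum (ntot I ni) g = rsum (ni i) (fun r => g (off ni i + r)%nat).
Proof. intros Hi H. rewrite rsum_blocks. rewrite (rsum_single I _ i Hi); auto.
  intros j Hj Hji. apply rsum_zero; intros r Hr; apply H; auto. Qed.

Lemma inQ_upd I ni Qi x i v : (i < I)%nat -> inQ I ni Qi x -> supp (ni i) v -> Qi i v -> inQ I ni Qi (upd ni x i v).
Proof. intros Hi [Hs Hb] Hv Qv. split.
  - intros k Hk. pose proof (off_ntot I ni i Hi). rewrite upd_out by lia. auto.
  - intros j Hj. destruct (Nat.eq_dec j i).
    + subst. replace (blk ni (upd ni x i v) i) with v; auto. extensionality r. unfold blk.
      destruct (Nat.ltb_spec r (ni i)). rewrite upd_in; auto. rewrite Hv; auto.
    + replace (blk ni (upd ni x i v) j) with (blk ni x j); auto. extensionality r. unfold blk.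
      destruct (Nat.ltb_spec r (ni j)); auto. rewrite upd_other; auto. Qed.

Definition comb (t : R) (u v : vec) : vec := fun k => t * u k + (1 - t) * v k.

Lemma inQ_comb I ni Qi u v t : (forall i, (i < I)%nat -> convexQ (ni i) (Qi i)) ->
  inQ I ni Qi u -> inQ I ni Qi v -> 0 <= t <= 1 -> inQ I ni Qi (comb t u v).
Proof. intros Hcv [Hu Qu] [Hv Qv] Ht. split.
  - intros k Hk; unfold comb; rewrite Hu, Hv by auto; ring.
  - intros i Hi. replace (blk ni (comb t u v) i) with (fun k => t * blk ni u i k + (1 - t) * blk ni v i k).
    + apply Hcv; auto; intros k Hk; unfold blk; destruct (Nat.ltb_spec k (ni i)); auto; lia.
    + extensionality k. unfold blk, comb. destruct (Nat.ltb_spec k (ni i)); auto; ring. Qed.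
Definition cvc (n : nat) (xs : nat -> vec) (x : vec) : Prop :=
  forall k, (k < n)%nat -> Un_cv (fun m => xs m k) (x k).

Lemma cv_const c : Un_cv (fun _ => c) c.
Proof. intros eps He; exists 0%nat; intros; unfold Rdist; rewrite Rminus_diag, Rabs_R0; lra. Qed.

Lemma cv_rsum d (s : nat -> nat -> R) (l : nat -> R) :
  (forall k, (k < d)%nat -> Un_cv (fun m => s m k) (l k)) -> Un_cv (fun m => rsum d (s m)) (rsum d l).
Proof. induction d; intros H; simpl. apply cv_const.
  apply CV_plus. apply IHd; intros; apply H; lia. apply H; lia. Qed.

Lemma cv_minus a b la lb : Un_cv a la -> Un_cv b lb -> Un_cv (fun m => a m - b m) (la - lb).
Proof. intros Ha Hb. apply CV_minus; auto. Qed.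

Lemma cvc_nsq n xs x : cvc n xs x -> Un_cv (fun m => nsq n (vsub (xs m) x)) 0.
Proof. intros H. unfold nsq. replace 0 with (rsum n (fun _ => 0)) by (apply rsum_zero; auto).
  apply cv_rsum. intros k Hk. replace 0 with ((x k - x k) * ((x k - x k) * 1)) by ring.
  unfold vsub; simpl. apply CV_mult. apply cv_minus; auto; apply cv_const.
  apply CV_mult. apply cv_minus; auto; apply cv_const. apply cv_const. Qed.

Lemma nsq_cv_conv n xs x : Un_cv (fun m => nsq n (vsub (xs m) x)) 0 -> converges_to n xs x.
Proof. intros H eps He. destruct (H (eps ^ 2)) as [N HN]. nra. exists N; intros m Hm.
  apply vnorm_lt_iff; auto. specialize (HN m Hm). unfold Rdist in HN. rewrite Rminus_0_r in HN.
  pose proof (nsq_nonneg n (vsub (xs m) x)). rewrite Rabs_right in HN; lra. Qed.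

Lemma cvc_conv n xs x : cvc n xs x -> converges_to n xs x.
Proof. intros; apply nsq_cv_conv, cvc_nsq; auto. Qed.

Lemma sqrt_sq_pow x : 0 <= x -> sqrt x ^ 2 = x.
Proof. intros; rewrite <- Rsqr_pow2, Rsqr_sqrt; auto. Qed.

Lemma coord_abs_le n v k : (k < n)%nat -> Rabs (v k) <= vnorm n v.
Proof. intros Hk. apply abs_le_of_sq. apply sqrt_pos. rewrite vnorm_nsq. rewrite sqrt_sq_pow by apply nsq_nonneg.
  apply coord_le_nsq; auto. Qed.

Lemma conv_cvc n xs x : converges_to n xs x -> cvc n xs x.
Proof. intros H k Hk eps He. destruct (H eps He) as [N HN]; exists N; intros m Hm.
  unfold Rdist. eapply Rle_lt_trans; [|apply (HN m Hm)]. apply (coord_abs_le n (vsub (xs m) x) k Hk). Qed.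

Lemma cauchy_lim n xs : (forall k, (k < n)%nat -> Cauchy_crit (fun m => xs m k)) ->
  exists x, supp n x /\ cvc n xs x.
Proof. intros H.
  exists (fun k => if Nat.ltb k n then epsilon (inhabits 0) (fun l => Un_cv (fun m => xs m k) l) else 0).
  split. intros k Hk. destruct (Nat.ltb_spec k n); auto; lia.
  intros k Hk. destruct (Nat.ltb_spec k n); try lia. apply epsilon_spec.
  destruct (R_complete _ (H k Hk)) as [l Hl]; exists l; auto. Qed.



Lemma nsq_blk_le I ni a b i : (i < I)%nat ->
  nsq (ni i) (vsub (blk ni a i) (blk ni b i)) <= nsq (ntot I ni) (vsub a b).
Proof. intros Hi. unfold nsq. rewrite rsum_blocks.
  replace (rsum (ni i) (fun k => vsub (blk ni a i) (blk ni b i) k ^ 2))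
    with ((fun j => rsum (ni j) (fun r => vsub a b (off ni j + r)%nat ^ 2)) i).
  apply (rsum_term_le I (fun j => rsum (ni j) (fun r => vsub a b (off ni j + r)%nat ^ 2))); auto. intros; apply rsum_nonneg; intros; apply pow2_ge_0.
  simpl. apply rsum_ext; intros r Hr. unfold vsub. rewrite !blk_eq; auto. Qed.

Lemma inQ_closed_seq I ni Qi xs x : (forall i, (i < I)%nat -> closedQ (ni i) (Qi i)) ->
  (forall m, inQ I ni Qi (xs m)) -> cvc (ntot I ni) xs x -> supp (ntot I ni) x -> inQ I ni Qi x.
Proof. intros Hcl HQ Hc Hs. split; auto. intros i Hi. apply NNPP; intros HNo.
  destruct (Hcl i Hi (blk ni x i)) as [del [Hd Hdel]]; auto.
  { intros k Hk; unfold blk; destruct (Nat.ltb_spec k (ni i)); auto; lia. }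
  pose proof (cvc_nsq _ _ _ Hc) as Hn. destruct (Hn (del ^ 2)) as [N HN]. nra.
  specialize (HN N (le_n _)). unfold Rdist in HN; rewrite Rminus_0_r, Rabs_right in HN by (apply Rle_ge, nsq_nonneg).
  apply (Hdel (blk ni (xs N) i)).
  { intros k Hk; unfold blk; destruct (Nat.ltb_spec k (ni i)); auto; lia. }
  apply vnorm_lt_iff; auto. eapply Rle_lt_trans; [apply nsq_blk_le; eauto| auto].
  apply (proj2 (HQ N)); auto. Qed.
Lemma pd_spec h x k : ex_pd h x k -> has_pd h x k (pd h x k).
Proof. intros [l Hl]. unfold pd. apply epsilon_spec. exists l; auto. Qed.

Lemma shift_shift p k a b : shift (shift p k a) k b = shift p k (a + b).
Proof. extensionality m. unfold shift. destruct (Nat.eqb m k); ring. Qed.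

Lemma shift_0 p k : shift p k 0 = p.
Proof. extensionality m. unfold shift. destruct (Nat.eqb m k); ring. Qed.

Lemma deriv_translate (phi : R -> R) t l : derivable_pt_lim (fun s => phi (t + s)) 0 l -> derivable_pt_lim phi t l.
Proof. intros H eps He. destruct (H eps He) as [del Hd]. exists del. intros hh H1 H2.
  specialize (Hd hh H1 H2). cbv beta in Hd. rewrite Rplus_0_l, Rplus_0_r in Hd. auto. Qed.

Lemma deriv_shift h p k t : ex_pd h (shift p k t) k ->
  derivable_pt_lim (fun s => h (shift p k s)) t (pd h (shift p k t) k).
Proof. intros He. apply deriv_translate. pose proof (pd_spec _ _ _ He) as Hp. unfold has_pd in Hp.
  rewrite (functional_extensionality (fun s => h (shift (shift p k t) k s)) (fun s => h (shift p k (t + s)))) in Hp; auto.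
  intros s; rewrite shift_shift; auto. Qed.

Lemma MVT_any (f f' : R -> R) b : (forall c, Rabs c <= Rabs b -> derivable_pt_lim f c (f' c)) ->
  exists c, Rabs c <= Rabs b /\ f b - f 0 = f' c * b.
Proof. intros H. destruct (Rtotal_order 0 b) as [Hb|[Hb|Hb]].
  - destruct (MVT_cor2 f f' 0 b Hb) as [c [Hc1 Hc2]].
    { intros c Hc; apply H. rewrite !Rabs_right; lra. }
    exists c; split. rewrite !Rabs_right; lra. lra.
  - subst. exists 0; split. lra. ring.
  - destruct (MVT_cor2 f f' b 0 Hb) as [c [Hc1 Hc2]].
    { intros c Hc; apply H. rewrite (Rabs_left b) by lra. unfold Rabs; destruct (Rcase_abs c); lra. }
    exists c; split. rewrite (Rabs_left b) by lra. rewrite Rabs_left by lra. lra. lra. Qed.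

Lemma fin_del n (P : nat -> R -> Prop) : (forall j del del', 0 < del' <= del -> P j del -> P j del') ->
  (forall j, (j < n)%nat -> exists del, 0 < del /\ P j del) -> exists del, 0 < del /\ forall j, (j < n)%nat -> P j del.
Proof. intros Hm. induction n; intros H. exists 1; split; [lra|intros; lia].
  destruct IHn as [d1 [Hd1 H1]]. intros; apply H; lia.
  destruct (H n (Nat.lt_succ_diag_r n)) as [d2 [Hd2 H2]].
  exists (Rmin d1 d2). split. apply Rmin_pos; auto. intros j Hj.
  destruct (Nat.eq_dec j n). subst. apply (Hm n d2); auto. split. apply Rmin_pos; auto. apply Rmin_r.
  apply (Hm j d1). split. apply Rmin_pos; auto. apply Rmin_l. apply H1; lia. Qed.

Definition line (x d : vec) (t : R) : vec := fun k => x k + t * d k.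

Definition pp (x d : vec) (s : R) (j : nat) : vec := fun k => if Nat.ltb k j then x k + s * d k else x k.

Lemma pp_0 x d s : pp x d s 0 = x.
Proof. extensionality k; unfold pp. destruct (Nat.ltb_spec k 0); auto; lia. Qed.

Lemma pp_n n x d s : supp n d -> pp x d s n = line x d s.
Proof. intros Hd; extensionality k; unfold pp, line. destruct (Nat.ltb_spec k n); auto. rewrite Hd; auto; ring. Qed.

Lemma pp_S x d s j : pp x d s (S j) = shift (pp x d s j) j (s * d j).
Proof. extensionality k; unfold pp, shift. destruct (Nat.eqb_spec k j).
  subst. destruct (Nat.ltb_spec j (S j)); destruct (Nat.ltb_spec j j); try lia; ring.
  destruct (Nat.ltb_spec k (S j)); destruct (Nat.ltb_spec k j); try lia; ring. Qed.

Lemma pp_supp n x d s j c : supp n x -> supp n d -> (j < n)%nat -> supp n (shift (pp x d s j) j c).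
Proof. intros Hx Hd Hj k Hk. unfold shift, pp. destruct (Nat.eqb_spec k j); try lia.
  destruct (Nat.ltb_spec k j); try lia. auto. Qed.

Lemma pp_dist n x d s j c : (j < n)%nat -> Rabs c <= Rabs (s * d j) ->
  nsq n (vsub (shift (pp x d s j) j c) x) <= s ^ 2 * nsq n d.
Proof. intros Hj Hc. unfold nsq. rewrite <- rsum_scal. apply rsum_le. intros k Hk.
  unfold vsub, shift, pp. destruct (Nat.eqb_spec k j).
  - subst. destruct (Nat.ltb_spec j j); try lia. replace (x j + c - x j) with c by ring.
    apply Rsqr_le_abs_1 in Hc. unfold Rsqr in Hc. simpl. lra.
  - destruct (Nat.ltb_spec k j). replace (x k + s * d k - x k) with (s * d k) by ring. rewrite Rpow_mult_distr; lra.
    replace (x k - x k) with 0 by ring. pose proof (pow2_ge_0 s); pose proof (pow2_ge_0 (d k)).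
    simpl; nra. Qed.

Lemma telescope n (g : nat -> R) : g n - g 0%nat = rsum n (fun j => g (S j) - g j).
Proof. induction n; simpl; [ring|]. rewrite <- IHn; ring. Qed.

Section Chain.
Variables (n : nat) (U : vec -> Prop) (h : vec -> R).
Hypothesis HU : open_in n U.
Hypothesis Hex : forall k, (k < n)%nat -> forall x, U x -> ex_pd h x k.
Hypothesis Hc : forall k, (k < n)%nat -> cont_on n U (fun z => pd h z k).

Lemma chain0 x d : U x -> supp n x -> supp n d ->
  derivable_pt_lim (fun t => h (line x d t)) 0 (rsum n (fun k => pd h x k * d k)).
Proof. intros Ux Sx Sd eps He.
  set (SS := rsum n (fun k => Rabs (d k)) + 1).
  assert (HS : 0 < SS). { unfold SS. assert (0 <= rsum n (fun k => Rabs (d k))) by (apply rsum_nonneg; intros; apply Rabs_pos). lra. }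
  set (e' := eps / (2 * SS)). assert (He' : 0 < e') by (unfold e'; apply Rdiv_lt_0_compat; lra).
  destruct (fin_del n (fun j del => forall z, supp n z -> U z -> vnorm n (vsub z x) < del -> Rabs (pd h z j - pd h x j) < e'))
    as [d0 [Hd0 H0]].
  { intros j del del' Hdd P z Sz Uz Hz. apply P; auto; lra. }
  { intros j Hj. apply (Hc j Hj x Ux e' He'). }
  destruct (HU x Ux) as [d1 [Hd1 H1]].
  set (d2 := Rmin d0 d1). assert (Hd2 : 0 < d2) by (apply Rmin_pos; auto).
  set (nd := sqrt (nsq n d)). assert (Hnd : 0 <= nd) by apply sqrt_pos.
  assert (Hdel : 0 < d2 / (nd + 1)) by (apply Rdiv_lt_0_compat; lra).
  exists (mkposreal _ Hdel). intros s Hs0 Hs. simpl in Hs.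
  assert (Hsn : Rabs s * nd < d2).
  { assert (Rabs s * (nd + 1) < d2). { apply (Rmult_lt_compat_r (nd+1)) in Hs; [|lra].
      unfold Rdiv in Hs. rewrite Rmult_assoc, Rinv_l, Rmult_1_r in Hs by lra. auto. }
    assert (0 <= Rabs s) by apply Rabs_pos. nra. }
  assert (Hball : forall z, supp n z -> nsq n (vsub z x) <= s ^ 2 * nsq n d -> U z /\ vnorm n (vsub z x) < d0).
  { intros z Sz Hz. assert (vnorm n (vsub z x) < d2).
    { apply vnorm_lt_iff; auto. eapply Rle_lt_trans; [apply Hz|].
      assert (Hsq : s ^ 2 * nsq n d = (Rabs s * nd) ^ 2).
      { unfold nd. rewrite Rpow_mult_distr, pow2_abs, sqrt_sq_pow; auto. apply nsq_nonneg. }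
      rewrite Hsq. assert (0 <= Rabs s * nd) by (apply Rmult_le_pos; auto; apply Rabs_pos). nra. }
    split. apply H1; auto. unfold d2 in H; pose proof (Rmin_r d0 d1); lra.
    unfold d2 in H; pose proof (Rmin_l d0 d1); lra. }
  assert (Hj : forall j, (j < n)%nat ->
    Rabs (h (pp x d s (S j)) - h (pp x d s j) - s * (pd h x j * d j)) <= Rabs s * (e' * Rabs (d j))).
  { intros j Hjn. rewrite pp_S.
    destruct (MVT_any (fun t => h (shift (pp x d s j) j t)) (fun t => pd h (shift (pp x d s j) j t) j) (s * d j))
      as [c [Hc1 Hc2]].
    { intros c Hcc. apply deriv_shift. apply Hex; auto. apply Hball. apply pp_supp; auto. apply pp_dist; auto. }
    cbv beta in Hc2. rewrite shift_0 in Hc2.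
    replace (h (shift (pp x d s j) j (s * d j)) - h (pp x d s j) - s * (pd h x j * d j))
      with ((pd h (shift (pp x d s j) j c) j - pd h x j) * (s * d j)) by (rewrite Hc2; ring).
    destruct (Hball (shift (pp x d s j) j c)) as [Uz Bz]. apply pp_supp; auto. apply pp_dist; auto.
    pose proof (H0 j Hjn _ (pp_supp n x d s j c Sx Sd Hjn) Uz Bz).
    rewrite Rabs_mult, Rabs_mult. pose proof (Rabs_pos s); pose proof (Rabs_pos (d j)).
    set (A := Rabs (pd h (shift (pp x d s j) j c) j - pd h x j)) in *.
    replace (A * (Rabs s * Rabs (d j))) with ((Rabs s * Rabs (d j)) * A) by ring.
    replace (Rabs s * (e' * Rabs (d j))) with ((Rabs s * Rabs (d j)) * e') by ring.
    apply Rmult_le_compat_l. apply Rmult_le_pos; auto. lra. }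
  rewrite Rplus_0_l. replace (line x d 0) with x.
  2:{ extensionality k; unfold line; ring. }
  rewrite <- (pp_n n x d s Sd). rewrite <- (pp_0 x d s) at 2.
  rewrite (telescope n (fun j => h (pp x d s j))).
  assert (Hsum : Rabs (rsum n (fun j => h (pp x d s (S j)) - h (pp x d s j)) - s * rsum n (fun k => pd h x k * d k))
     <= Rabs s * (e' * (SS - 1))).
  { rewrite <- rsum_scal, <- rsum_minus. eapply Rle_trans. apply rsum_abs.
    unfold SS; replace (rsum n (fun k => Rabs (d k)) + 1 - 1) with (rsum n (fun k => Rabs (d k))) by ring.
    rewrite <- rsum_scal, <- rsum_scal. apply rsum_le. intros j Hjn.
    auto. }
  assert (Hsp : 0 < Rabs s) by (apply Rabs_pos_lt; auto).
  replace ((rsum n (fun j => h (pp x d s (S j)) - h (pp x d s j))) / s - rsum n (fun k => pd h x k * d k))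
    with ((rsum n (fun j => h (pp x d s (S j)) - h (pp x d s j)) - s * rsum n (fun k => pd h x k * d k)) / s)
    by (field; auto).
  unfold Rdiv. rewrite Rabs_mult, Rabs_inv.
  apply (Rmult_lt_reg_l (Rabs s)); auto. rewrite <- Rmult_assoc, (Rmult_comm (Rabs s)), Rmult_assoc, Rinv_r, Rmult_1_r by lra.
  eapply Rle_lt_trans; [apply Hsum|]. apply Rmult_lt_compat_l; auto.
  unfold e'. replace (eps / (2 * SS) * (SS - 1)) with (eps * ((SS - 1) / (2 * SS))) by (field; lra).
  assert ((SS - 1) / (2 * SS) < 1). { apply (Rmult_lt_reg_r (2 * SS)); [lra|]. unfold Rdiv; rewrite Rmult_assoc, Rinv_l; lra. }
  assert (0 <= (SS - 1) / (2 * SS)). { unfold Rdiv; apply Rmult_le_pos; [|left; apply Rinv_0_lt_compat; lra]; unfold SS. assert (0 <= rsum n (fun k => Rabs (d k))) by (apply rsum_nonneg; intros; apply Rabs_pos). lra. }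
  nra. Qed.

Lemma line_line x d a b : line (line x d a) d b = line x d (a + b).
Proof. extensionality k; unfold line; ring. Qed.

Lemma line_supp x d t : supp n x -> supp n d -> supp n (line x d t).
Proof. intros Hx Hd k Hk; unfold line; rewrite Hx, Hd; auto; ring. Qed.

Lemma chain x d t : U (line x d t) -> supp n x -> supp n d ->
  derivable_pt_lim (fun s => h (line x d s)) t (rsum n (fun k => pd h (line x d t) k * d k)).
Proof. intros Ux Sx Sd. apply deriv_translate.
  pose proof (chain0 (line x d t) d Ux (line_supp x d t Sx Sd) Sd).
  rewrite (functional_extensionality (fun s => h (line x d (t + s))) (fun s => h (line (line x d t) d s))); auto.
  intros s; rewrite line_line; auto. Qed.
End Chain.
Lemma convex_deriv (phi : R -> R) D : (forall t, 0 < t < 1 -> phi t <= t * phi 1 + (1 - t) * phi 0) ->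
  derivable_pt_lim phi 0 D -> D <= phi 1 - phi 0.
Proof. intros Hc Hd. apply Rnot_lt_le; intros HN.
  set (e := (D - (phi 1 - phi 0)) / 2). assert (He : 0 < e) by (unfold e; lra).
  destruct (Hd e He) as [del Hdel].
  set (t := Rmin (del / 2) (1/2)). assert (Ht : 0 < t) by (unfold t; apply Rmin_pos; [pose proof (cond_pos del)|]; lra).
  assert (Ht1 : t <= 1/2) by apply Rmin_r. assert (Ht2 : t <= del / 2) by apply Rmin_l.
  specialize (Hdel t ltac:(lra)). rewrite Rabs_right in Hdel by lra. specialize (Hdel ltac:(pose proof (cond_pos del); lra)).
  rewrite Rplus_0_l in Hdel. specialize (Hc t ltac:(lra)).
  assert ((phi t - phi 0) / t <= phi 1 - phi 0).
  { apply (Rmult_le_reg_r t); auto. unfold Rdiv; rewrite Rmult_assoc, Rinv_l by lra. lra. }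
  apply Rabs_def2 in Hdel. unfold e in *. lra. Qed.

Lemma min_deriv (phi : R -> R) D a b : (forall t, 0 < t <= 1 -> 0 <= phi t - phi 0 + a * t + b * t ^ 2) ->
  0 <= b -> derivable_pt_lim phi 0 D -> 0 <= D + a.
Proof. intros Hm Hb Hd. apply Rnot_lt_le; intros HN.
  set (G := D + a). set (e := - G / 2). assert (He : 0 < e) by (unfold e, G; lra).
  destruct (Hd e He) as [del Hdel].
  set (t := Rmin (Rmin (del / 2) 1) (- G / (2 * (b + 1)))).
  assert (HG : 0 < - G / (2 * (b + 1))) by (apply Rdiv_lt_0_compat; unfold G; lra).
  assert (Ht : 0 < t) by (unfold t; repeat apply Rmin_pos; try lra; pose proof (cond_pos del); lra).
  assert (Ht1 : t <= 1) by (unfold t; eapply Rle_trans; [apply Rmin_l|apply Rmin_r]).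
  assert (Ht2 : t <= del / 2) by (unfold t; eapply Rle_trans; [apply Rmin_l|apply Rmin_l]).
  assert (Ht3 : t <= - G / (2 * (b + 1))) by apply Rmin_r.
  specialize (Hdel t ltac:(lra)). rewrite Rabs_right in Hdel by lra. specialize (Hdel ltac:(pose proof (cond_pos del); lra)).
  rewrite Rplus_0_l in Hdel. specialize (Hm t ltac:(lra)).
  assert (Hbt : b * t <= - G / 2).
  { assert (t * (2 * (b + 1)) <= - G). { apply (Rmult_le_compat_r (2 * (b + 1))) in Ht3; [|lra].
      unfold Rdiv in Ht3; rewrite Rmult_assoc, Rinv_l, Rmult_1_r in Ht3 by lra; auto. }
    nra. }
  assert (0 <= (phi t - phi 0) / t + a + b * t).
  { apply (Rmult_le_reg_r t); auto. replace (((phi t - phi 0) / t + a + b * t) * t) with (phi t - phi 0 + a * t + b * t ^ 2) by (field; lra). lra. }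
  apply Rabs_def2 in Hdel. unfold e, G in *. lra. Qed.

Lemma fprox0 ni f y : fprox ni f 0 y = f.
Proof. extensionality i; extensionality x; unfold fprox. unfold Rdiv; ring. Qed.

Lemma Ftau0 ni F y : Ftau ni F 0 y = F.
Proof. extensionality i; extensionality x; extensionality r; unfold Ftau; ring. Qed.

Section Game.
Variables (I : nat) (ni : nat -> nat) (Qi : nat -> vec -> Prop) (f : nat -> vec -> R).

Definition VIb (tau : R) (y x : vec) : Prop :=
  inQ I ni Qi x /\ forall z, inQ I ni Qi z ->
    0 <= rsum I (fun i => rsum (ni i) (fun r => Ftau ni (Fgrad ni f) tau y i x r * (z (off ni i + r)%nat - x (off ni i + r)%nat))).

Definition dirv (x : vec) (i : nat) (v : vec) : vec :=
  fun k => if inb ni i k then v (k - off ni i)%nat - x k else 0.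

Lemma dirv_supp x i v : (i < I)%nat -> supp (ntot I ni) (dirv x i v).
Proof. intros Hi k Hk. unfold dirv, inb. pose proof (off_ntot I ni i Hi).
  destruct (Nat.leb_spec (off ni i) k); destruct (Nat.ltb_spec k (off ni i + ni i)); simpl; auto; lia. Qed.

Lemma line_dirv x i v t : line x (dirv x i v) t = upd ni x i (fun r => t * v r + (1 - t) * blk ni x i r).
Proof. extensionality k. unfold line, dirv, upd, inb, blk.
  destruct (Nat.leb_spec (off ni i) k); destruct (Nat.ltb_spec k (off ni i + ni i)); simpl; try ring.
  destruct (Nat.ltb_spec (k - off ni i) (ni i)); try lia. replace (off ni i + (k - off ni i))%nat with k by lia. ring. Qed.

Lemma line_dirv1 x i v : supp (ni i) v -> line x (dirv x i v) 1 = upd ni x i v.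
Proof. intros Hv. rewrite line_dirv. f_equal. extensionality r. unfold blk. destruct (Nat.ltb_spec r (ni i)); ring. Qed.

Lemma line_dirv0 x i v : line x (dirv x i v) 0 = x.
Proof. extensionality k. unfold line; ring. Qed.

Lemma dirv_at x i v r : (r < ni i)%nat -> dirv x i v (off ni i + r)%nat = v r - x (off ni i + r)%nat.
Proof. intros Hr. unfold dirv. rewrite inb_true by auto. f_equal. f_equal. lia. Qed.

Lemma dirv_other x i v j r : j <> i -> (r < ni j)%nat -> dirv x i v (off ni j + r)%nat = 0.
Proof. intros; unfold dirv. rewrite inb_false; auto. Qed.

Lemma blk_supp x i : supp (ni i) (blk ni x i).
Proof. intros k Hk; unfold blk; destruct (Nat.ltb_spec k (ni i)); auto; lia. Qed.

Lemma line_dirv_Q x i v t : (forall i, (i < I)%nat -> convexQ (ni i) (Qi i)) -> (i < I)%nat -> inQ I ni Qi x ->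
  supp (ni i) v -> Qi i v -> 0 <= t <= 1 -> inQ I ni Qi (line x (dirv x i v) t).
Proof. intros Hcv Hi Hx Hv Qv Ht. rewrite line_dirv. apply inQ_upd; auto.
  intros k Hk; rewrite Hv by auto; unfold blk; destruct (Nat.ltb_spec k (ni i)); try ring; lia.
  apply Hcv; auto. apply blk_supp. apply (proj2 Hx); auto. Qed.

Lemma quad_line x y i v t :
  rsum (ni i) (fun r => (line x (dirv x i v) t (off ni i + r)%nat - y (off ni i + r)%nat) ^ 2)
  = rsum (ni i) (fun r => (x (off ni i + r)%nat - y (off ni i + r)%nat) ^ 2)
    + 2 * t * rsum (ni i) (fun r => (x (off ni i + r)%nat - y (off ni i + r)%nat) * (v r - x (off ni i + r)%nat))
    + t ^ 2 * rsum (ni i) (fun r => (v r - x (off ni i + r)%nat) ^ 2).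
Proof. rewrite <- !rsum_scal, <- !rsum_plus. apply rsum_ext; intros r Hr. unfold line. rewrite dirv_at by auto. ring. Qed.

Hypothesis Hfreg : forall i, (i < I)%nat ->
     exists U, open_in (ntot I ni) U /\ (forall x, inQ I ni Qi x -> U x) /\ C2_on (ntot I ni) U (f i).

Lemma deriv_f x i v : (i < I)%nat -> inQ I ni Qi x ->
  derivable_pt_lim (fun t => f i (line x (dirv x i v) t)) 0
    (rsum (ni i) (fun r => Fgrad ni f i x r * (v r - x (off ni i + r)%nat))).
Proof. intros Hi Hx. destruct (Hfreg i Hi) as [U [HU [HQU [_ [H1 _]]]]].
  pose proof (chain0 (ntot I ni) U (f i) HU (fun k Hk => proj1 (H1 k Hk)) (fun k Hk => proj2 (H1 k Hk)) x (dirv x i v)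
    (HQU x Hx) (proj1 Hx) (dirv_supp x i v Hi)) as H.
  rewrite (rsum_blockonly I ni i _ Hi) in H.
  - rewrite (rsum_ext (ni i) _ (fun r => Fgrad ni f i x r * (v r - x (off ni i + r)%nat))) in H; auto.
    intros r Hr. rewrite dirv_at; auto.
  - intros j r Hj Hji Hr. rewrite dirv_other; auto; ring. Qed.

Lemma NE_player tau y x i v : 0 <= tau -> (forall i, (i < I)%nat -> convexQ (ni i) (Qi i)) -> (i < I)%nat -> inQ I ni Qi x ->
  supp (ni i) v -> Qi i v ->
  (forall t, 0 < t <= 1 -> fprox ni f tau y i x <= fprox ni f tau y i (line x (dirv x i v) t)) ->
  0 <= rsum (ni i) (fun r => Ftau ni (Fgrad ni f) tau y i x r * (v r - x (off ni i + r)%nat)).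
Proof. intros Htau Hcv Hi Hx Hv Qv Hmin.
  pose proof (deriv_f x i v Hi Hx) as Hd.
  set (A := rsum (ni i) (fun r => (x (off ni i + r)%nat - y (off ni i + r)%nat) * (v r - x (off ni i + r)%nat))).
  set (B := rsum (ni i) (fun r => (v r - x (off ni i + r)%nat) ^ 2)).
  assert (HB : 0 <= B) by (apply rsum_nonneg; intros; apply pow2_ge_0).
  assert (H := min_deriv (fun t => f i (line x (dirv x i v) t)) (rsum (ni i) (fun r => Fgrad ni f i x r * (v r - x (off ni i + r)%nat))) (tau * A) (tau / 2 * B)).
  assert (0 <= rsum (ni i) (fun r => Fgrad ni f i x r * (v r - x (off ni i + r)%nat)) + tau * A).
  { apply H; [|apply Rmult_le_pos; lra|exact Hd].
    intros t Ht. specialize (Hmin t Ht). unfold fprox in Hmin. rewrite quad_line in Hmin.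
    fold A B in Hmin. cbv beta. rewrite line_dirv0.
    set (Q0 := rsum (ni i) (fun r => (x (off ni i + r)%nat - y (off ni i + r)%nat) ^ 2)) in *.
    replace (rsum (ni i) (fun r => (x (off ni i + r)%nat - y (off ni i + r)%nat) ^ 2)) with Q0 in Hmin by reflexivity.
    assert (E : tau / 2 * (Q0 + 2 * t * A + t ^ 2 * B) = tau / 2 * Q0 + tau * A * t + tau / 2 * B * t ^ 2) by field.
    lra. }
  replace (rsum (ni i) (fun r => Ftau ni (Fgrad ni f) tau y i x r * (v r - x (off ni i + r)%nat)))
    with (rsum (ni i) (fun r => Fgrad ni f i x r * (v r - x (off ni i + r)%nat)) + tau * A); auto.
  unfold A. rewrite <- rsum_scal, <- rsum_plus. apply rsum_ext; intros; unfold Ftau; ring. Qed.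
End Game.

Lemma upd_blk ni x i : upd ni x i (blk ni x i) = x.
Proof. extensionality k. unfold upd, blk. destruct (Nat.leb_spec (off ni i) k); destruct (Nat.ltb_spec k (off ni i + ni i)); simpl; auto.
  destruct (Nat.ltb_spec (k - off ni i) (ni i)); try lia. f_equal; lia. Qed.

Section Game2.
Variables (I : nat) (ni : nat -> nat) (Qi : nat -> vec -> Prop) (f : nat -> vec -> R).
Hypothesis Hcv : forall i, (i < I)%nat -> convexQ (ni i) (Qi i).
Hypothesis Hfcv : forall i, (i < I)%nat -> forall x, inQ I ni Qi x ->
     forall u v t, supp (ni i) u -> supp (ni i) v -> Qi i u -> Qi i v -> 0 <= t <= 1 ->
       f i (upd ni x i (fun k => t * u k + (1 - t) * v k))
         <= t * f i (upd ni x i u) + (1 - t) * f i (upd ni x i v).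
Hypothesis Hfreg : forall i, (i < I)%nat ->
     exists U, open_in (ntot I ni) U /\ (forall x, inQ I ni Qi x -> U x) /\ C2_on (ntot I ni) U (f i).

Lemma player_NE tau y x i v : 0 <= tau -> (i < I)%nat -> inQ I ni Qi x -> supp (ni i) v -> Qi i v ->
  0 <= rsum (ni i) (fun r => Ftau ni (Fgrad ni f) tau y i x r * (v r - x (off ni i + r)%nat)) ->
  fprox ni f tau y i x <= fprox ni f tau y i (upd ni x i v).
Proof. intros Htau Hi Hx Hv Qv HG.
  pose proof (deriv_f I ni Qi f Hfreg x i v Hi Hx) as Hd.
  set (phi := fun t => f i (line x (dirv ni x i v) t)) in *.
  assert (Hc : forall t, 0 < t < 1 -> phi t <= t * phi 1 + (1 - t) * phi 0).
  { intros t Ht. unfold phi. rewrite line_dirv, line_dirv1, line_dirv0 by auto.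
    replace (f i x) with (f i (upd ni x i (blk ni x i))) by (rewrite upd_blk; auto). apply Hfcv; auto; [apply blk_supp|apply (proj2 Hx i Hi)|lra]. }
  pose proof (convex_deriv phi _ Hc Hd) as Hcd.
  set (A := rsum (ni i) (fun r => (x (off ni i + r)%nat - y (off ni i + r)%nat) * (v r - x (off ni i + r)%nat))).
  set (B := rsum (ni i) (fun r => (v r - x (off ni i + r)%nat) ^ 2)).
  assert (HB : 0 <= B) by (apply rsum_nonneg; intros; apply pow2_ge_0).
  assert (HG' : rsum (ni i) (fun r => Ftau ni (Fgrad ni f) tau y i x r * (v r - x (off ni i + r)%nat))
    = rsum (ni i) (fun r => Fgrad ni f i x r * (v r - x (off ni i + r)%nat)) + tau * A).
  { unfold A. rewrite <- rsum_scal, <- rsum_plus. apply rsum_ext; intros; unfold Ftau; ring. }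
  unfold fprox. rewrite <- (line_dirv1 ni x i v Hv). rewrite quad_line. fold A B.
  unfold phi in Hcd. rewrite line_dirv0 in Hcd.
  set (Q0 := rsum (ni i) (fun r => (x (off ni i + r)%nat - y (off ni i + r)%nat) ^ 2)).
  assert (E : tau / 2 * (Q0 + 2 * 1 * A + 1 ^ 2 * B) = tau / 2 * Q0 + tau * A + tau / 2 * B) by field.
  assert (0 <= tau / 2 * B) by (apply Rmult_le_pos; lra).
  lra. Qed.

Lemma NE_VI tau y x : 0 <= tau -> is_NE I ni Qi (fprox ni f tau y) x -> VIb I ni Qi f tau y x.
Proof. intros Htau [Hx Hne]. split; auto. intros z Hz. apply rsum_nonneg. intros i Hi.
  rewrite (rsum_ext (ni i) _ (fun r => Ftau ni (Fgrad ni f) tau y i x r * (blk ni z i r - x (off ni i + r)%nat))).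
  2:{ intros r Hr; rewrite blk_eq; auto. }
  apply (NE_player I ni Qi f Hfreg); auto. apply blk_supp. apply (proj2 Hz); auto.
  intros t Ht. rewrite line_dirv. apply Hne; auto.
  - intros k Hk. unfold blk. destruct (Nat.ltb_spec k (ni i)); try lia. ring.
  - apply Hcv; [auto|apply blk_supp|apply blk_supp|apply (proj2 Hz i Hi)|apply (proj2 Hx i Hi)|lra]. Qed.

Lemma VI_NE tau y x : 0 <= tau -> VIb I ni Qi f tau y x -> is_NE I ni Qi (fprox ni f tau y) x.
Proof. intros Htau [Hx Hvi]. split; auto. intros i Hi v Hv Qv.
  apply player_NE; auto.
  specialize (Hvi (upd ni x i v) (inQ_upd I ni Qi x i v Hi Hx Hv Qv)).
  rewrite (rsum_single I _ i Hi) in Hvi.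
  - rewrite (rsum_ext (ni i) _ (fun r => Ftau ni (Fgrad ni f) tau y i x r * (v r - x (off ni i + r)%nat))) in Hvi; auto.
    intros r Hr; rewrite upd_in; auto.
  - intros j Hj Hji. apply rsum_zero; intros r Hr. rewrite upd_other; auto. ring. Qed.
End Game2.

Lemma fin_bound I (P : nat -> R -> Prop) : (forall j B B', B <= B' -> P j B -> P j B') ->
  (forall j, (j < I)%nat -> exists B, P j B) -> exists B, 0 <= B /\ forall j, (j < I)%nat -> P j B.
Proof. intros Hm. induction I; intros H. exists 0; split; [lra|intros; lia].
  destruct IHI as [b1 [Hb1 H1]]. intros; apply H; lia.
  destruct (H I (Nat.lt_succ_diag_r I)) as [b2 H2].
  exists (Rmax b1 b2). split. eapply Rle_trans; [apply Hb1|apply Rmax_l]. intros j Hj.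
  destruct (Nat.eq_dec j I). subst. apply (Hm I b2); auto. apply Rmax_r.
  apply (Hm j b1). apply Rmax_l. apply H1; lia. Qed.

Lemma line_comb z x t : line z (vsub x z) t = comb t x z.
Proof. extensionality k; unfold line, comb, vsub; ring. Qed.

Section Lip.
Variables (I : nat) (ni : nat -> nat) (Qi : nat -> vec -> Prop) (f : nat -> vec -> R).
Hypothesis Hcv : forall i, (i < I)%nat -> convexQ (ni i) (Qi i).
Hypothesis Hfreg : forall i, (i < I)%nat ->
     exists U, open_in (ntot I ni) U /\ (forall x, inQ I ni Qi x -> U x) /\ C2_on (ntot I ni) U (f i).
Hypothesis Hfbd : forall i, (i < I)%nat -> exists B, forall x, inQ I ni Qi x ->
     forall k l, (k < ntot I ni)%nat -> (l < ntot I ni)%nat ->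
       Rabs (pd (f i) x k) <= B /\ Rabs (pd (fun z => pd (f i) z k) x l) <= B.

Lemma pd_lip i k B x z : (i < I)%nat -> (k < ntot I ni)%nat -> inQ I ni Qi x -> inQ I ni Qi z ->
  (forall w, inQ I ni Qi w -> forall l, (l < ntot I ni)%nat -> Rabs (pd (fun z => pd (f i) z k) w l) <= B) ->
  Rabs (pd (f i) x k - pd (f i) z k) <= B * rsum (ntot I ni) (fun l => Rabs (x l - z l)).
Proof. intros Hi Hk Hx Hz HB.
  destruct (Hfreg i Hi) as [U [HU [HQU [_ [_ H2]]]]].
  set (h := fun w => pd (f i) w k).
  set (d := vsub x z).
  assert (Sd : supp (ntot I ni) d) by (intros l Hl; unfold d, vsub; rewrite (proj1 Hx), (proj1 Hz); auto; ring).
  destruct (MVT_cor2 (fun s => h (line z d s)) (fun s => rsum (ntot I ni) (fun l => pd h (line z d s) l * d l)) 0 1 Rlt_0_1)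
    as [c [Hc2 Hc1]].
  { intros c Hc. apply (chain (ntot I ni) U h HU (fun l Hl => proj1 (H2 k l Hk Hl)) (fun l Hl => proj2 (H2 k l Hk Hl))).
    apply HQU. unfold d; rewrite line_comb. apply inQ_comb; auto. apply (proj1 Hz). auto. }
  assert (E1 : line z d 1 = x) by (extensionality l; unfold line, d, vsub; ring).
  assert (E0 : line z d 0 = z) by (extensionality l; unfold line, d, vsub; ring).
  cbv beta in Hc2. rewrite E1, E0 in Hc2. unfold h in Hc2. rewrite Hc2, Rminus_0_r, Rmult_1_r.
  assert (Hin : inQ I ni Qi (line z d c)) by (unfold d; rewrite line_comb; apply inQ_comb; auto; lra).
  eapply Rle_trans. apply rsum_abs. rewrite <- rsum_scal. apply rsum_le. intros l Hl.
  rewrite Rabs_mult. unfold d, vsub. apply Rmult_le_compat_r. apply Rabs_pos. apply HB; auto. Qed.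

Definition Fv (tau : R) (y x : vec) : vec := asm I ni (fun i r => Ftau ni (Fgrad ni f) tau y i x r).

Lemma Fv_lip tau y : exists L2, 0 <= L2 /\ forall x z, inQ I ni Qi x -> inQ I ni Qi z ->
  nsq (ntot I ni) (vsub (Fv tau y x) (Fv tau y z)) <= L2 * nsq (ntot I ni) (vsub x z).
Proof.
  destruct (fin_bound I (fun i B => forall x, inQ I ni Qi x -> forall k l, (k < ntot I ni)%nat -> (l < ntot I ni)%nat ->
       Rabs (pd (fun z => pd (f i) z k) x l) <= B)) as [B [HB0 HB]].
  { intros j b b' Hbb P x Hx k l Hk Hl. eapply Rle_trans; [apply P|]; auto. }
  { intros j Hj. destruct (Hfbd j Hj) as [B HB]. exists B. intros; apply HB; auto. }
  set (n := ntot I ni).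
  exists (2 * B ^ 2 * INR n * INR n + 2 * tau ^ 2). split.
  { assert (0 <= INR n) by apply pos_INR. pose proof (pow2_ge_0 B); pose proof (pow2_ge_0 tau).
    apply Rplus_le_le_0_compat; [|apply Rmult_le_pos; lra].
    apply Rmult_le_pos; auto. apply Rmult_le_pos; auto. apply Rmult_le_pos; auto; lra. }
  intros x z Hx Hz.
  set (S := nsq n (vsub x z)).
  assert (HS : (rsum n (fun l => Rabs (x l - z l))) ^ 2 <= INR n * S).
  { eapply Rle_trans. apply rsum_sq_le. unfold S, nsq, vsub. right. f_equal. apply rsum_ext; intros; apply pow2_abs. }
  set (g := fun k => 2 * B ^ 2 * INR n * S + 2 * tau ^ 2 * (x k - z k) ^ 2).
  apply Rle_trans with (rsum n g).
  - unfold nsq, n. rewrite !rsum_blocks. apply rsum_le; intros i Hi. apply rsum_le; intros r Hr.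
    unfold vsub, Fv. rewrite !asm_at by auto. unfold Ftau, Fgrad, g.
    assert (Hk : (off ni i + r < ntot I ni)%nat) by (pose proof (off_ntot I ni i Hi); lia).
    pose proof (pd_lip i (off ni i + r) B x z Hi Hk Hx Hz (fun w Hw l Hl => HB i Hi w Hw _ l Hk Hl)) as Hl.
    set (a := pd (f i) x (off ni i + r)%nat - pd (f i) z (off ni i + r)%nat) in *.
    set (e := x (off ni i + r)%nat - z (off ni i + r)%nat).
    replace (pd (f i) x (off ni i + r)%nat + tau * (x (off ni i + r)%nat - y (off ni i + r)%nat) -
      (pd (f i) z (off ni i + r)%nat + tau * (z (off ni i + r)%nat - y (off ni i + r)%nat))) with (a + tau * e) by (unfold a, e; ring).
    set (R0 := rsum (ntot I ni) (fun l => Rabs (x l - z l))) in *.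
    assert (a ^ 2 <= B ^ 2 * R0 ^ 2).
    { rewrite <- Rpow_mult_distr. rewrite <- (pow2_abs a). apply pow_incr. split. apply Rabs_pos. auto. }
    fold n in HS. assert (a ^ 2 <= B ^ 2 * (INR n * S)).
    { eapply Rle_trans; eauto. apply Rmult_le_compat_l. apply pow2_ge_0. auto. }
    pose proof (pow2_ge_0 (a - tau * e)).
    assert ((a + tau * e) ^ 2 <= 2 * a ^ 2 + 2 * (tau * e) ^ 2) by nra.
    rewrite Rpow_mult_distr in H2. nra.
  - unfold g. rewrite rsum_plus, rsum_const, rsum_scal. unfold S, nsq, vsub. right. ring. Qed.
End Lip.

Lemma rsum_quad d a b t : rsum d (fun k => (a k - t * b k) ^ 2) =
  rsum d (fun k => a k ^ 2) - 2 * t * rsum d (fun k => a k * b k) + t ^ 2 * rsum d (fun k => b k ^ 2).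
Proof. rewrite <- !rsum_scal, <- rsum_minus, <- rsum_plus. apply rsum_ext; intros; ring. Qed.

Lemma cv_inv_N : Un_cv (fun m => / (INR m + 1)) 0.
Proof. intros eps He. destruct (archimed_cor1 eps He) as [N [HN HN0]]. exists N. intros m Hm.
  unfold Rdist. rewrite Rminus_0_r. assert (0 < INR m + 1) by (pose proof (pos_INR m); lra).
  rewrite Rabs_right by (left; apply Rinv_0_lt_compat; auto).
  apply Rle_lt_trans with (/ INR N); auto. apply Rinv_le_contravar. apply lt_0_INR; lia.
  apply le_INR in Hm. lra. Qed.

Lemma abs_lt_of_sq a b : 0 < b -> a ^ 2 < b ^ 2 -> Rabs a < b.
Proof. intros Hb H. unfold Rabs; destruct (Rcase_abs a); nra. Qed.

Lemma le_lim_0 a (b : nat -> R) : (forall m, a <= b m) -> Un_cv b 0 -> a <= 0.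
Proof. intros H Hb. apply (Rle_cv_lim (Un := fun _ => a) (Vn := b)); auto. apply cv_const. Qed.

Section Proj.
Variables (I : nat) (ni : nat -> nat) (Qi : nat -> vec -> Prop).
Hypothesis Hcv : forall i, (i < I)%nat -> convexQ (ni i) (Qi i).
Hypothesis Hcl : forall i, (i < I)%nat -> closedQ (ni i) (Qi i).

Definition isproj (u p : vec) : Prop :=
  inQ I ni Qi p /\ forall q, inQ I ni Qi q -> ip (ntot I ni) (vsub u p) (vsub q p) <= 0.

Lemma proj_exists u q0 : supp (ntot I ni) u -> inQ I ni Qi q0 -> exists p, isproj u p.
Proof. intros Su Hq0. set (n := ntot I ni).
  set (E := fun s => exists q, inQ I ni Qi q /\ s = - nsq n (vsub u q)).
  destruct (completeness E) as [M [HM1 HM2]].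
  { exists 0. intros s [q [_ ->]]. pose proof (nsq_nonneg n (vsub u q)); lra. }
  { exists (- nsq n (vsub u q0)); exists q0; auto. }
  set (d2 := - M).
  assert (Hlow : forall q, inQ I ni Qi q -> d2 <= nsq n (vsub u q)).
  { intros q Hq. unfold d2. assert (- nsq n (vsub u q) <= M) by (apply HM1; exists q; auto). lra. }
  assert (Happ : forall e, 0 < e -> exists q, inQ I ni Qi q /\ nsq n (vsub u q) < d2 + e).
  { intros e He. apply NNPP; intros HN. assert (M <= M - e); [|lra].
    apply HM2. intros s [q [Hq ->]]. apply Rnot_lt_le; intros Hlt. apply HN. exists q; split; auto. unfold d2; lra. }
  set (qs := fun m : nat => epsilon (inhabits u) (fun q => inQ I ni Qi q /\ nsq n (vsub u q) < d2 + / (INR m + 1))).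
  assert (Hqs : forall m, inQ I ni Qi (qs m) /\ nsq n (vsub u (qs m)) < d2 + / (INR m + 1)).
  { intros m. unfold qs. apply epsilon_spec. apply Happ. apply Rinv_0_lt_compat. pose proof (pos_INR m); lra. }
  assert (Hpar : forall m p, nsq n (vsub (qs m) (qs p)) <= 2 * / (INR m + 1) + 2 * / (INR p + 1)).
  { intros m p. destruct (Hqs m) as [Qm Hm]. destruct (Hqs p) as [Qp Hp].
    assert (Hmid := Hlow (comb (1/2) (qs m) (qs p)) (inQ_comb I ni Qi (qs m) (qs p) (1/2) Hcv Qm Qp ltac:(lra))).
    assert (E1 : nsq n (vsub (qs m) (qs p)) = 2 * nsq n (vsub u (qs m)) + 2 * nsq n (vsub u (qs p)) - 4 * nsq n (vsub u (comb (1/2) (qs m) (qs p)))).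
    { unfold nsq. rewrite <- !rsum_scal, <- rsum_plus, <- rsum_minus. apply rsum_ext; intros; unfold vsub, comb. field. }
    lra. }
  assert (Hcau : forall k, (k < n)%nat -> Cauchy_crit (fun m => qs m k)).
  { intros k Hk eps He. destruct (archimed_cor1 (eps ^ 2 / 4)) as [N [HN HN0]]. apply Rdiv_lt_0_compat; [nra|lra].
    exists N. intros m p Hm Hp. unfold Rdist. apply abs_lt_of_sq; [lra|].
    replace ((qs m k - qs p k) ^ 2) with (vsub (qs m) (qs p) k ^ 2) by (unfold vsub; ring).
    eapply Rle_lt_trans. apply (coord_le_nsq n); auto. eapply Rle_lt_trans. apply Hpar.
    assert (forall j, (N <= j)%nat -> / (INR j + 1) < eps ^ 2 / 4).
    { intros j Hj. apply Rle_lt_trans with (/ INR N); auto. apply Rinv_le_contravar. apply lt_0_INR; lia.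
      apply le_INR in Hj; lra. }
    pose proof (H m Hm). pose proof (H p Hp). lra. }
  destruct (cauchy_lim n qs Hcau) as [p [Sp Hp]].
  assert (Qp : inQ I ni Qi p) by (apply (inQ_closed_seq I ni Qi qs p); auto; intros m; apply (Hqs m)).
  assert (Hmin : nsq n (vsub u p) <= d2).
  { apply (Rle_cv_lim (Un := fun m => nsq n (vsub u (qs m))) (Vn := fun m => d2 + / (INR m + 1))).
    intros m; left; apply (Hqs m).
    unfold nsq. apply cv_rsum. intros k Hk. unfold vsub. simpl. apply CV_mult. apply cv_minus; [apply cv_const|auto].
    apply CV_mult. apply cv_minus; [apply cv_const|auto]. apply cv_const.
    assert (Hc2 : Un_cv (fun m => d2 + / (INR m + 1)) (d2 + 0)) by (apply CV_plus; [apply cv_const|apply cv_inv_N]).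
    rewrite Rplus_0_r in Hc2; exact Hc2. }
  exists p. split; auto. intros q Hq.
  set (a := ip n (vsub u p) (vsub q p)). set (b := nsq n (vsub q p)).
  assert (Hb : 0 <= b) by apply nsq_nonneg.
  assert (Ht : forall t, 0 < t <= 1 -> 2 * t * a <= t ^ 2 * b).
  { intros t Ht. pose proof (Hlow _ (inQ_comb I ni Qi q p t Hcv Hq Qp ltac:(lra))).
    assert (nsq n (vsub u (comb t q p)) = nsq n (vsub u p) - 2 * t * a + t ^ 2 * b).
    { unfold nsq, a, b, ip. rewrite <- rsum_quad. apply rsum_ext; intros; unfold vsub, comb; ring. }
    lra. }
  apply Rnot_lt_le; intros Ha0. assert (Ha : 0 < a) by exact Ha0. clear Ha0.
  set (t := Rmin 1 (a / (b + 1))).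
  assert (Ht0 : 0 < t) by (apply Rmin_pos; [lra|apply Rdiv_lt_0_compat; lra]).
  assert (Ht1 : t <= 1) by apply Rmin_l. assert (Ht2 : t <= a / (b + 1)) by apply Rmin_r.
  specialize (Ht t (conj Ht0 Ht1)).
  assert (t * (b + 1) <= a). { apply (Rmult_le_compat_r (b + 1)) in Ht2; [|lra]. unfold Rdiv in Ht2. rewrite Rmult_assoc, Rinv_l, Rmult_1_r in Ht2 by lra. auto. }
  assert (2 * a <= t * b). { apply (Rmult_le_reg_l t); auto. simpl in Ht. lra. }
  nra. Qed.

Lemma proj_nonexp u1 u2 p1 p2 : isproj u1 p1 -> isproj u2 p2 ->
  nsq (ntot I ni) (vsub p1 p2) <= nsq (ntot I ni) (vsub u1 u2).
Proof. intros [Q1 H1] [Q2 H2]. specialize (H1 p2 Q2). specialize (H2 p1 Q1).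
  set (n := ntot I ni) in *.
  assert (rsum n (fun k => (p1 k - p2 k) ^ 2) <= rsum n (fun k => (u1 k - u2 k) * (p1 k - p2 k))).
  { unfold ip, vsub in H1, H2.
    assert (E : rsum n (fun k => (p1 k - p2 k) ^ 2) - rsum n (fun k => (u1 k - u2 k) * (p1 k - p2 k))
      = rsum n (fun k => (u1 k - p1 k) * (p2 k - p1 k)) + rsum n (fun k => (u2 k - p2 k) * (p1 k - p2 k))).
    { rewrite <- rsum_minus, <- rsum_plus. apply rsum_ext; intros; ring. }
    lra. }
  assert (rsum n (fun k => (u1 k - u2 k) * (p1 k - p2 k)) <= rsum n (fun k => (u1 k - u2 k) ^ 2) / 2 + rsum n (fun k => (p1 k - p2 k) ^ 2) / 2).
  { unfold Rdiv. rewrite !(Rmult_comm _ (/ 2)), <- !rsum_scal, <- rsum_plus. apply rsum_le. intros k Hk.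
    pose proof (pow2_ge_0 (u1 k - u2 k - (p1 k - p2 k))). nra. }
  unfold nsq, vsub. lra. Qed.
End Proj.

Lemma nsq_sym n a b : nsq n (vsub a b) = nsq n (vsub b a).
Proof. unfold nsq, vsub. apply rsum_ext; intros; ring. Qed.

Lemma zero_of_small a : (forall eps, 0 < eps -> Rabs a < eps) -> a = 0.
Proof. intros H. destruct (Req_dec a 0); auto. exfalso. assert (0 < Rabs a) by (apply Rabs_pos_lt; auto).
  specialize (H (Rabs a) H1). lra. Qed.

Lemma pow_le_mono q m N : 0 <= q <= 1 -> (N <= m)%nat -> q ^ m <= q ^ N.
Proof. intros Hq Hm. replace m with (N + (m - N))%nat by lia. generalize (m - N)%nat as j. intros j.
  induction j. rewrite Nat.add_0_r; lra. rewrite Nat.add_succ_r. simpl.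
  pose proof (pow_le q (N + j) (proj1 Hq)). nra. Qed.

Lemma banach n (Q : vec -> Prop) (T : vec -> vec) c x0 :
  0 <= c < 1 -> Q x0 -> (forall x, Q (T x)) ->
  (forall x z, Q x -> Q z -> nsq n (vsub (T x) (T z)) <= c * nsq n (vsub x z)) ->
  (forall xs x, (forall m, Q (xs m)) -> cvc n xs x -> supp n x -> Q x) ->
  exists x, Q x /\ forall k, (k < n)%nat -> T x k = x k.
Proof. intros Hc Q0 QT HT Hcl.
  set (xs := fun m => Nat.iter m T x0).
  assert (Qxs : forall m, Q (xs m)) by (intros [|m]; simpl; auto).
  set (D0 := nsq n (vsub (xs 1%nat) (xs 0%nat))).
  assert (Hstep : forall m, nsq n (vsub (xs (S m)) (xs m)) <= c ^ m * D0).
  { induction m. rewrite pow_O, Rmult_1_l. right; reflexivity. replace (xs (S (S m))) with (T (xs (S m))) by reflexivity.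
    replace (xs (S m)) with (T (xs m)) at 2 by reflexivity.
    eapply Rle_trans. apply HT; auto. rewrite <- tech_pow_Rmult, Rmult_assoc. apply Rmult_le_compat_l; lra. }
  set (q := sqrt c). set (a := sqrt D0).
  assert (Hq : 0 <= q < 1). { split. apply sqrt_pos. unfold q. rewrite <- sqrt_1. apply sqrt_lt_1_alt; lra. }
  assert (Ha : 0 <= a) by apply sqrt_pos.
  assert (Hcoord : forall m k, (k < n)%nat -> Rabs (xs (S m) k - xs m k) <= a * q ^ m).
  { intros m k Hk. apply abs_le_of_sq. apply Rmult_le_pos; auto. apply pow_le; lra.
    replace (xs (S m) k - xs m k) with (vsub (xs (S m)) (xs m) k) by reflexivity.
    eapply Rle_trans. apply (coord_le_nsq n); auto. eapply Rle_trans. apply Hstep.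
    right. unfold a, q. rewrite Rpow_mult_distr, <- pow_mult, (Nat.mul_comm m 2), pow_mult.
    rewrite (sqrt_sq_pow c) by lra. rewrite (sqrt_sq_pow D0) by apply nsq_nonneg. ring. }
  assert (Hsum : forall m j k, (k < n)%nat -> Rabs (xs (m + j)%nat k - xs m k) <= a * (q ^ m - q ^ (m + j)) / (1 - q)).
  { intros m j k Hk. induction j.
    - rewrite Nat.add_0_r. replace (xs m k - xs m k) with 0 by ring. rewrite Rabs_R0. unfold Rdiv. replace (q ^ m - q ^ m) with 0 by ring.
      rewrite Rmult_0_r, Rmult_0_l; lra.
    - rewrite Nat.add_succ_r. replace (xs (S (m + j)) k - xs m k) with ((xs (S (m + j)) k - xs (m + j)%nat k) + (xs (m + j)%nat k - xs m k)) by ring.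
      eapply Rle_trans. apply Rabs_triang. pose proof (Hcoord (m + j)%nat k Hk).
      replace (a * (q ^ m - q ^ S (m + j)) / (1 - q)) with (a * q ^ (m + j) + a * (q ^ m - q ^ (m + j)) / (1 - q)).
      lra. simpl. field. lra. }
  assert (Hcau : forall k, (k < n)%nat -> Cauchy_crit (fun m => xs m k)).
  { intros k Hk eps He.
    destruct (pow_lt_1_zero q ltac:(rewrite Rabs_right; lra) (eps * (1 - q) / (a + 1))) as [N HN].
    { apply Rdiv_lt_0_compat; [apply Rmult_lt_0_compat|]; lra. }
    assert (Hb : forall m j, (N <= m)%nat -> Rabs (xs (m + j)%nat k - xs m k) < eps).
    { intros m j Hm. eapply Rle_lt_trans. apply Hsum; auto.
      assert (Hqm : q ^ m < eps * (1 - q) / (a + 1)).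
      { specialize (HN N (le_n N)). rewrite Rabs_right in HN by (apply Rle_ge, pow_le; lra).
        apply Rle_lt_trans with (q ^ N); [apply pow_le_mono; [lra|lia]|exact HN]. }
      pose proof (pow_le q (m + j) (proj1 Hq)).
      apply (Rmult_lt_reg_r (1 - q)); [lra|]. unfold Rdiv. rewrite Rmult_assoc, Rinv_l, Rmult_1_r by lra.
      assert (a * q ^ m < eps * (1 - q)).
      { apply Rle_lt_trans with ((a + 1) * q ^ m). pose proof (pow_le q m (proj1 Hq)); nra.
        replace (eps * (1 - q)) with ((a + 1) * (eps * (1 - q) / (a + 1))) by (field; lra).
        apply Rmult_lt_compat_l; lra. }
      nra. }
    exists N. intros m p Hm Hp. unfold Rdist. destruct (Nat.le_ge_cases m p).
    - replace p with (m + (p - m))%nat by lia. rewrite Rabs_minus_sym. apply Hb; lia.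
    - replace m with (p + (m - p))%nat by lia. apply Hb; lia. }
  destruct (cauchy_lim n xs Hcau) as [xst [Sx Hx]].
  assert (Qx : Q xst) by (apply (Hcl xs); auto).
  exists xst; split; auto. intros k Hk.
  enough (E : T xst k - xst k = 0) by lra.
  apply zero_of_small. intros eps He.
  pose proof (cvc_nsq n xs xst Hx) as Hn.
  destruct (Hn (eps ^ 2 / 4)) as [N1 HN1]. apply Rdiv_lt_0_compat; [nra|lra].
  destruct (Hx k Hk (eps / 2)) as [N2 HN2]. lra.
  set (m := (N1 + N2)%nat).
  specialize (HN1 m ltac:(unfold m; lia)). specialize (HN2 (S m) ltac:(unfold m; lia)).
  unfold Rdist in HN1, HN2. rewrite Rminus_0_r, Rabs_right in HN1 by (apply Rle_ge, nsq_nonneg).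
  assert (HA : Rabs (T xst k - T (xs m) k) < eps / 2).
  { apply abs_lt_of_sq. lra. replace (T xst k - T (xs m) k) with (vsub (T xst) (T (xs m)) k) by reflexivity.
    eapply Rle_lt_trans. apply (coord_le_nsq n); auto. eapply Rle_lt_trans. apply HT; auto.
    rewrite nsq_sym. pose proof (nsq_nonneg n (vsub (xs m) xst)).
    apply Rle_lt_trans with (nsq n (vsub (xs m) xst)). nra. replace ((eps / 2) ^ 2) with (eps ^ 2 / 4) by field. auto. }
  replace (T (xs m) k) with (xs (S m) k) in HA by reflexivity.
  replace (T xst k - xst k) with ((T xst k - xs (S m) k) + (xs (S m) k - xst k)) by ring.
  eapply Rle_lt_trans. apply Rabs_triang. lra. Qed.

Section Exist.
Variables (I : nat) (ni : nat -> nat) (Qi : nat -> vec -> Prop) (f : nat -> vec -> R).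
Hypothesis Hcv : forall i, (i < I)%nat -> convexQ (ni i) (Qi i).
Hypothesis Hcl : forall i, (i < I)%nat -> closedQ (ni i) (Qi i).
Hypothesis Hfreg : forall i, (i < I)%nat ->
     exists U, open_in (ntot I ni) U /\ (forall x, inQ I ni Qi x -> U x) /\ C2_on (ntot I ni) U (f i).
Hypothesis Hfbd : forall i, (i < I)%nat -> exists B, forall x, inQ I ni Qi x ->
     forall k l, (k < ntot I ni)%nat -> (l < ntot I ni)%nat ->
       Rabs (pd (f i) x k) <= B /\ Rabs (pd (fun z => pd (f i) z k) x l) <= B.
Hypothesis Hmon : monotone_on I ni Qi (Fgrad ni f).

Lemma ip_Fv tau y x w : rsum (ntot I ni) (fun k => Fv I ni f tau y x k * w k) =
  rsum I (fun i => rsum (ni i) (fun r => Ftau ni (Fgrad ni f) tau y i x r * w (off ni i + r)%nat)).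
Proof. rewrite rsum_blocks. apply rsum_ext; intros i Hi. apply rsum_ext; intros r Hr. unfold Fv. rewrite asm_at; auto. Qed.

Lemma strong_mono tau y x z : inQ I ni Qi x -> inQ I ni Qi z ->
  tau * nsq (ntot I ni) (vsub x z) <= ip (ntot I ni) (vsub (Fv I ni f tau y x) (Fv I ni f tau y z)) (vsub x z).
Proof. intros Hx Hz. pose proof (Hmon x z Hx Hz) as Hm.
  unfold ip, nsq. rewrite !rsum_blocks.
  assert (E : rsum I (fun i => rsum (ni i) (fun r => vsub (Fv I ni f tau y x) (Fv I ni f tau y z) (off ni i + r)%nat * vsub x z (off ni i + r)%nat))
    = rsum I (fun i => rsum (ni i) (fun r => (Fgrad ni f i x r - Fgrad ni f i z r) * (x (off ni i + r)%nat - z (off ni i + r)%nat)))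
      + tau * rsum I (fun i => rsum (ni i) (fun r => vsub x z (off ni i + r)%nat ^ 2))).
  { rewrite <- rsum_scal, <- rsum_plus. apply rsum_ext; intros i Hi. rewrite <- rsum_scal, <- rsum_plus.
    apply rsum_ext; intros r Hr. unfold vsub, Fv. rewrite !asm_at by auto. unfold Ftau. ring. }
  rewrite E. lra. Qed.

Lemma VI_exists tau y x0 : 0 < tau -> inQ I ni Qi x0 -> exists x, VIb I ni Qi f tau y x.
Proof. intros Htau Q0. set (n := ntot I ni).
  destruct (Fv_lip I ni Qi f Hcv Hfreg Hfbd tau y) as [L2 [HL2 HL]].
  set (L := L2 + tau ^ 2 + 1). assert (HL0 : 0 < L) by (unfold L; pose proof (pow2_ge_0 tau); lra).
  set (g := tau / L). assert (Hg : 0 < g) by (apply Rdiv_lt_0_compat; auto).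
  set (uu := fun x : vec => fun k => if Nat.ltb k n then x k - g * Fv I ni f tau y x k else 0).
  assert (Suu : forall x, supp n (uu x)). { intros x k Hk. unfold uu. destruct (Nat.ltb_spec k n); auto; lia. }
  set (T := fun x => epsilon (inhabits x0) (fun p => isproj I ni Qi (uu x) p)).
  assert (HTp : forall x, isproj I ni Qi (uu x) (T x)).
  { intros x. unfold T. apply epsilon_spec. apply (proj_exists I ni Qi Hcv Hcl (uu x) x0); auto. }
  set (c := 1 - tau ^ 2 / L).
  assert (Hc : 0 <= c < 1).
  { unfold c. assert (0 < tau ^ 2) by (apply pow_lt; auto). assert (tau ^ 2 / L < 1).
    { apply (Rmult_lt_reg_r L); auto. unfold Rdiv; rewrite Rmult_assoc, Rinv_l by lra. unfold L; lra. }
    assert (0 < tau ^ 2 / L) by (apply Rdiv_lt_0_compat; auto). lra. }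
  destruct (banach n (inQ I ni Qi) T c x0 Hc Q0) as [xs [Qxs Hfix]].
  - intros x; apply (HTp x).
  - intros x z Hx Hz. eapply Rle_trans. apply (proj_nonexp I ni Qi); apply HTp.
    set (S := nsq n (vsub x z)). set (F1 := Fv I ni f tau y x). set (F2 := Fv I ni f tau y z).
    assert (E : nsq n (vsub (uu x) (uu z)) = S - 2 * g * ip n (vsub x z) (vsub F1 F2) + g ^ 2 * nsq n (vsub F1 F2)).
    { unfold S, nsq, ip. rewrite <- rsum_quad. apply rsum_ext; intros k Hk. unfold uu, vsub.
      destruct (Nat.ltb_spec k n); try lia. unfold F1, F2; ring. }
    fold n. rewrite E. pose proof (strong_mono tau y x z Hx Hz) as Hsm. fold n F1 F2 S in Hsm.
    assert (Hip : ip n (vsub x z) (vsub F1 F2) = ip n (vsub F1 F2) (vsub x z)) by (unfold ip; apply rsum_ext; intros; ring).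
    pose proof (HL x z Hx Hz) as HLxz. fold n F1 F2 S in HLxz.
    assert (HS : 0 <= S) by apply nsq_nonneg.
    assert (g ^ 2 * nsq n (vsub F1 F2) <= g ^ 2 * L * S).
    { apply Rle_trans with (g ^ 2 * (L2 * S)). apply Rmult_le_compat_l. apply pow2_ge_0. auto.
      rewrite Rmult_assoc. apply Rmult_le_compat_l. apply pow2_ge_0. apply Rmult_le_compat_r; auto. unfold L; pose proof (pow2_ge_0 tau); lra. }
    assert (Eg : g ^ 2 * L = tau ^ 2 / L) by (unfold g; field; lra).
    assert (Eg2 : 2 * g * tau = 2 * (tau ^ 2 / L)) by (unfold g; field; lra).
    rewrite Eg in H. unfold c. rewrite Hip.
    assert (2 * g * (tau * S) <= 2 * g * ip n (vsub F1 F2) (vsub x z)) by (apply Rmult_le_compat_l; lra).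
    nra.
  - intros zs z Hzs Hzc Sz. apply (inQ_closed_seq I ni Qi zs z); auto.
  - exists xs. split; auto. intros q Hq. destruct (HTp xs) as [_ Hp]. specialize (Hp q Hq).
    unfold ip in Hp. rewrite (rsum_ext n _ (fun k => - g * (Fv I ni f tau y xs k * (q k - xs k)))) in Hp.
    2:{ intros k Hk. unfold vsub, uu. rewrite Hfix by auto. destruct (Nat.ltb_spec k n); try lia. ring. }
    rewrite rsum_scal in Hp. pose proof (ip_Fv tau y xs (fun k => q k - xs k)) as Ei. cbv beta in Ei. rewrite <- Ei. fold n.
    assert (0 <= g * rsum n (fun k => Fv I ni f tau y xs k * (q k - xs k))) by lra.
    apply (Rmult_le_reg_l g); auto. lra. Qed.
End Exist.

Definition sel (un : nat -> R) (l : R) (N : nat) (e : R) : nat :=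
  epsilon (inhabits 0%nat) (fun p => (N <= p)%nat /\ Rabs (un p - l) < e).

Fixpoint phis (un : nat -> R) (l : R) (m : nat) : nat :=
  match m with
  | O => sel un l 0 1
  | S m' => sel un l (S (phis un l m')) (/ (INR m + 1))
  end.

Lemma valadh_pt un l N e : ValAdh un l -> 0 < e -> exists p, (N <= p)%nat /\ Rabs (un p - l) < e.
Proof. intros H He. destruct (H (disc l (mkposreal e He)) N) as [p [Hp Hd]].
  exists (mkposreal e He); intros z Hz; auto. exists p; split; auto. Qed.

Lemma sel_spec un l N e : ValAdh un l -> 0 < e -> (N <= sel un l N e)%nat /\ Rabs (un (sel un l N e) - l) < e.
Proof. intros H He. unfold sel. apply epsilon_spec. apply valadh_pt; auto. Qed.

Lemma valadh_sub un l : ValAdh un l -> exists phi : nat -> nat,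
  (forall m, (phi m < phi (S m))%nat) /\ Un_cv (fun m => un (phi m)) l.
Proof. intros H. exists (phis un l). split.
  - intros m. change (phis un l (S m)) with (sel un l (S (phis un l m)) (/ (INR (S m) + 1))). pose proof (sel_spec un l (S (phis un l m)) (/ (INR (S m) + 1)) H) as [A _].
    apply Rinv_0_lt_compat. pose proof (pos_INR (S m)); lra. lia.
  - intros eps He. destruct (archimed_cor1 eps He) as [N [HN HN0]]. exists N. intros m Hm. unfold Rdist.
    assert (Hb : Rabs (un (phis un l m) - l) < / (INR m + 1)).
    { destruct m. change (phis un l 0) with (sel un l 0 1). replace (/ (INR 0 + 1)) with 1 by (simpl; field). apply (sel_spec un l 0 1 H). lra.
      change (phis un l (S m)) with (sel un l (S (phis un l m)) (/ (INR (S m) + 1))). apply (sel_spec un l (S (phis un l m)) (/ (INR (S m) + 1)) H). apply Rinv_0_lt_compat. pose proof (pos_INR (S m)); lra. }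
    eapply Rlt_le_trans; [apply Hb|]. apply Rle_trans with (/ INR N); [|lra].
    apply Rinv_le_contravar. apply lt_0_INR; lia. apply le_INR in Hm; lra. Qed.

Lemma incr_ge (phi : nat -> nat) : (forall m, (phi m < phi (S m))%nat) -> forall m, (m <= phi m)%nat.
Proof. intros H m; induction m. lia. specialize (H m); lia. Qed.

Lemma incr_mono (phi : nat -> nat) : (forall m, (phi m < phi (S m))%nat) -> forall m p, (m <= p)%nat -> (phi m <= phi p)%nat.
Proof. intros H m p Hmp. induction Hmp. lia. specialize (H m0); lia. Qed.

Lemma sub_cv (phi : nat -> nat) u l : (forall m, (phi m < phi (S m))%nat) -> Un_cv u l -> Un_cv (fun m => u (phi m)) l.
Proof. intros Hp Hu eps He. destruct (Hu eps He) as [N HN]. exists N. intros m Hm. apply HN.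
  pose proof (incr_ge phi Hp m); lia. Qed.

Lemma bw1 (un : nat -> R) M : (forall m, Rabs (un m) <= M) -> exists phi l,
  (forall m, (phi m < phi (S m))%nat) /\ Un_cv (fun m => un (phi m)) l.
Proof. intros H. destruct (Bolzano_Weierstrass un (fun c => -M <= c <= M) (compact_P3 (-M) M)) as [l Hl].
  { intros m. specialize (H m). unfold Rabs in H; destruct (Rcase_abs (un m)); lra. }
  destruct (valadh_sub un l Hl) as [phi [H1 H2]]. exists phi, l; auto. Qed.

Lemma bwn d (s : nat -> vec) M : (forall m k, (k < d)%nat -> Rabs (s m k) <= M) ->
  exists phi x, (forall m, (phi m < phi (S m))%nat) /\ forall k, (k < d)%nat -> Un_cv (fun m => s (phi m) k) (x k).
Proof. induction d; intros H.
  - exists (fun m => m), (fun _ => 0). split. intros; lia. intros; lia.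
  - destruct IHd as [phi [x [Hp Hx]]]. intros m k Hk; apply H; lia.
    destruct (bw1 (fun m => s (phi m) d) M) as [psi [l [Hps Hl]]]. intros m; apply H; lia.
    exists (fun m => phi (psi m)), (fun k => if Nat.eqb k d then l else x k). split.
    + intros m. specialize (Hps m). pose proof (Hp (psi m)).
      pose proof (incr_mono phi Hp (S (psi m)) (psi (S m)) ltac:(lia)). lia.
    + intros k Hk. destruct (Nat.eqb_spec k d). subst; auto.
      apply (sub_cv psi (fun m => s (phi m) k)); auto. apply Hx; lia. Qed.

Lemma decr_le (a : nat -> R) : (forall m, a (S m) <= a m) -> forall N m, (N <= m)%nat -> a m <= a N.
Proof. intros H N m Hm. induction Hm. lra. specialize (H m); lra. Qed.

Lemma cv_squeeze (u : nat -> R) c (v : nat -> R) : (forall m, Rabs (u m - c) <= v m) -> Un_cv v 0 -> Un_cv u c.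
Proof. intros H Hv eps He. destruct (Hv eps He) as [N HN]. exists N. intros m Hm. specialize (HN m Hm).
  unfold Rdist in *. rewrite Rminus_0_r in HN. eapply Rle_lt_trans. apply H. eapply Rle_lt_trans. apply RRle_abs. auto. Qed.

Lemma cv_abs_diff u c : Un_cv u c -> Un_cv (fun m => Rabs (u m - c)) 0.
Proof. intros H eps He. destruct (H eps He) as [N HN]; exists N; intros m Hm. specialize (HN m Hm).
  unfold Rdist in *. rewrite Rminus_0_r, Rabs_Rabsolu; auto. Qed.

Lemma cv_sqrt0 a : (forall m, 0 <= a m) -> Un_cv a 0 -> Un_cv (fun m => sqrt (a m)) 0.
Proof. intros Ha H eps He. destruct (H (eps ^ 2)) as [N HN]. nra. exists N; intros m Hm. specialize (HN m Hm).
  unfold Rdist in *. rewrite Rminus_0_r in *. rewrite Rabs_right in HN by (apply Rle_ge; auto).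
  rewrite Rabs_right by (apply Rle_ge, sqrt_pos). rewrite <- (sqrt_pow2 eps) by lra. apply sqrt_lt_1_alt. split; auto. Qed.

Section Final.
Variables (I : nat) (ni : nat -> nat) (Qi : nat -> vec -> Prop) (f : nat -> vec -> R).
Hypothesis Hcv : forall i, (i < I)%nat -> convexQ (ni i) (Qi i).
Hypothesis Hmon : monotone_on I ni Qi (Fgrad ni f).

Lemma VI_unique tau y x z : 0 < tau -> VIb I ni Qi f tau y x -> VIb I ni Qi f tau y z -> x = z.
Proof. intros Htau [Hx Vx] [Hz Vz]. set (n := ntot I ni).
  specialize (Vx z Hz). specialize (Vz x Hx).
  pose proof (ip_Fv I ni f tau y x (fun k => z k - x k)) as E1. pose proof (ip_Fv I ni f tau y z (fun k => x k - z k)) as E2.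
  cbv beta in E1, E2. rewrite <- E1 in Vx. rewrite <- E2 in Vz.
  pose proof (strong_mono I ni Qi f Hmon tau y x z Hx Hz) as Hsm. fold n in Hsm, Vx, Vz.
  assert (E : ip n (vsub (Fv I ni f tau y x) (Fv I ni f tau y z)) (vsub x z) =
    - rsum n (fun k => Fv I ni f tau y x k * (z k - x k)) - rsum n (fun k => Fv I ni f tau y z k * (x k - z k))).
  { unfold ip. rewrite <- rsum_opp, <- rsum_minus. apply rsum_ext; intros; unfold vsub; ring. }
  assert (Hn : nsq n (vsub x z) <= 0).
  { assert (tau * nsq n (vsub x z) <= 0) by lra. pose proof (nsq_nonneg n (vsub x z)). nra. }
  extensionality k. destruct (Nat.lt_ge_cases k n).
  - pose proof (coord_le_nsq n (vsub x z) k H). assert (H1 : vsub x z k ^ 2 = 0) by (pose proof (pow2_ge_0 (vsub x z k)); lra).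
    unfold vsub in H1. nra.
  - rewrite (proj1 Hx), (proj1 Hz); auto. Qed.

Lemma fejer tau a b p y0 : 0 < tau -> VIb I ni Qi f tau b a -> VIb I ni Qi f 0 y0 p ->
  nsq (ntot I ni) (vsub a p) + nsq (ntot I ni) (vsub a b) <= nsq (ntot I ni) (vsub b p).
Proof. intros Htau [Ha Va] [Hp Vp]. specialize (Va p Hp). specialize (Vp a Ha). pose proof (Hmon a p Ha Hp) as Hm.
  set (W := rsum I (fun i => rsum (ni i) (fun r => (a (off ni i + r)%nat - b (off ni i + r)%nat) * (p (off ni i + r)%nat - a (off ni i + r)%nat)))).
  assert (E : rsum I (fun i => rsum (ni i) (fun r => Ftau ni (Fgrad ni f) tau b i a r * (p (off ni i + r)%nat - a (off ni i + r)%nat)))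
     + rsum I (fun i => rsum (ni i) (fun r => Ftau ni (Fgrad ni f) 0 y0 i p r * (a (off ni i + r)%nat - p (off ni i + r)%nat)))
     + rsum I (fun i => rsum (ni i) (fun r => (Fgrad ni f i a r - Fgrad ni f i p r) * (a (off ni i + r)%nat - p (off ni i + r)%nat)))
     = tau * W).
  { unfold W. rewrite <- !rsum_plus, <- rsum_scal. apply rsum_ext; intros i Hi. rewrite <- !rsum_plus, <- rsum_scal.
    apply rsum_ext; intros r Hr. unfold Ftau. ring. }
  assert (HW : 0 <= W). { assert (0 <= tau * W) by lra. nra. }
  assert (EW : W = rsum (ntot I ni) (fun k => (a k - b k) * (p k - a k))) by (rewrite rsum_blocks; reflexivity).
  assert (E2 : nsq (ntot I ni) (vsub b p) = nsq (ntot I ni) (vsub a p) + nsq (ntot I ni) (vsub a b) + 2 * W).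
  { rewrite EW. unfold nsq. rewrite <- rsum_scal, <- !rsum_plus. apply rsum_ext; intros; unfold vsub; ring. }
  lra. Qed.
End Final.

Theorem mainTheorem7
  (I : nat) (ni : nat -> nat) (Qi : nat -> vec -> Prop) (f : nat -> vec -> R)
  (* players' dimensions *)
  (Hni : forall i, (i < I)%nat -> (0 < ni i)%nat)
  (* Assumption 1: Q_i nonempty closed convex; f_i convex in x_i *)
  (HQne : forall i, (i < I)%nat -> nonemptyQ (ni i) (Qi i))
  (HQcl : forall i, (i < I)%nat -> closedQ (ni i) (Qi i))
  (HQcv : forall i, (i < I)%nat -> convexQ (ni i) (Qi i))
  (Hfcv : forall i, (i < I)%nat -> forall x, inQ I ni Qi x ->
     forall u v t, supp (ni i) u -> supp (ni i) v -> Qi i u -> Qi i v -> 0 <= t <= 1 ->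
       f i (upd ni x i (fun k => t * u k + (1 - t) * v k))
         <= t * f i (upd ni x i u) + (1 - t) * f i (upd ni x i v))
  (* Assumptions 1-2: f_i twice continuously differentiable (on an open set
     containing Q) with bounded first and second derivatives on Q *)
  (Hfreg : forall i, (i < I)%nat ->
     exists U, open_in (ntot I ni) U /\ (forall x, inQ I ni Qi x -> U x) /\
       C2_on (ntot I ni) U (f i))
  (Hfbd : forall i, (i < I)%nat -> exists B, forall x, inQ I ni Qi x ->
     forall k l, (k < ntot I ni)%nat -> (l < ntot I ni)%nat ->
       Rabs (pd (f i) x k) <= B /\ Rabs (pd (fun z => pd (f i) z k) x l) <= B)
  (* monotone NEP *)
  (Hmon : monotone_on I ni Qi (Fgrad ni f))
  (* nonempty set of Nash equilibria *)
  (HNE : exists xs, is_NE I ni Qi f xs)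
  (tau : R) (Htau : 0 < tau)
  (HP : forall y, supp (ntot I ni) y ->
     exists M, is_Upsilon I ni Qi (Ftau ni (Fgrad ni f) tau y) M /\ P_matrix I M) :
  (forall y, supp (ntot I ni) y ->
     exists! x, is_NE I ni Qi (fprox ni f tau y) x) /\
  (forall Stau : vec -> vec,
     (forall y, supp (ntot I ni) y -> is_NE I ni Qi (fprox ni f tau y) (Stau y)) ->
     forall x0, inQ I ni Qi x0 ->
       exists xs, is_NE I ni Qi f xs /\
         converges_to (ntot I ni) (fun m => Nat.iter m Stau x0) xs).
Proof.
  destruct HNE as [xe Hxe].
  set (n := ntot I ni).
  assert (VIe : forall y0, VIb I ni Qi f 0 y0 xe).
  { intros y0. apply (NE_VI I ni Qi f HQcv Hfreg); [lra|]. rewrite fprox0; auto. }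
  assert (Qe : inQ I ni Qi xe) by apply (proj1 Hxe).
  split.
  - intros y Sy. destruct (VI_exists I ni Qi f HQcv HQcl Hfreg Hfbd Hmon tau y xe Htau Qe) as [x Hx].
    exists x. split. apply (VI_NE I ni Qi f Hfcv Hfreg); auto; lra.
    intros x' Hx'. apply (VI_unique I ni Qi f Hmon tau y); auto.
    apply (NE_VI I ni Qi f HQcv Hfreg); auto; lra.
  - intros Stau HS x0 Hx0.
    set (xs := fun m => Nat.iter m Stau x0).
    assert (QS : forall m, inQ I ni Qi (xs m)).
    { induction m. exact Hx0. change (xs (S m)) with (Stau (xs m)). apply (HS (xs m) (proj1 IHm)). }
    assert (VIm : forall m, VIb I ni Qi f tau (xs m) (xs (S m))).
    { intros m. apply (NE_VI I ni Qi f HQcv Hfreg); [lra|]. apply (HS (xs m) (proj1 (QS m))). }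
    assert (Fej : forall p, VIb I ni Qi f 0 x0 p -> forall m,
       nsq n (vsub (xs (S m)) p) + nsq n (vsub (xs (S m)) (xs m)) <= nsq n (vsub (xs m) p)).
    { intros p Vp m. apply (fejer I ni Qi f Hmon tau _ _ p x0 Htau (VIm m) Vp). }
    assert (Dec : forall p, VIb I ni Qi f 0 x0 p -> forall m, nsq n (vsub (xs (S m)) p) <= nsq n (vsub (xs m) p)).
    { intros p Vp m. pose proof (Fej p Vp m). pose proof (nsq_nonneg n (vsub (xs (S m)) (xs m))). lra. }
    set (Mb := sqrt (nsq n (vsub (xs 0%nat) xe)) + rsum n (fun k => Rabs (xe k))).
    assert (Hbd : forall m k, (k < n)%nat -> Rabs (xs m k) <= Mb).
    { intros m k Hk. replace (xs m k) with (vsub (xs m) xe k + xe k) by (unfold vsub; ring).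
      eapply Rle_trans. apply Rabs_triang. apply Rplus_le_compat.
      - eapply Rle_trans. apply (coord_abs_le n); auto. rewrite vnorm_nsq. apply sqrt_le_1_alt.
        apply (decr_le (fun m => nsq n (vsub (xs m) xe))); [|lia]. intros j; apply Dec; auto.
      - apply (rsum_term_le n (fun k => Rabs (xe k))); auto. intros; apply Rabs_pos. }
    destruct (bwn n xs Mb Hbd) as [phi [xl [Hphi Hxl]]].
    set (xbar := fun k => if Nat.ltb k n then xl k else 0).
    assert (Sbar : supp n xbar) by (intros k Hk; unfold xbar; destruct (Nat.ltb_spec k n); auto; lia).
    assert (Cbar : cvc n (fun m => xs (phi m)) xbar).
    { intros k Hk. unfold xbar. destruct (Nat.ltb_spec k n); try lia. apply Hxl; auto. }
    assert (Qbar : inQ I ni Qi xbar) by (apply (inQ_closed_seq I ni Qi (fun m => xs (phi m)) xbar); auto).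
    assert (Step : Un_cv (fun m => nsq n (vsub (xs (S m)) (xs m))) 0).
    { destruct (decreasing_cv (fun m => nsq n (vsub (xs m) xe))) as [l Hl].
      - intros m; apply Dec; auto.
      - exists 0. intros z [m ->]. unfold opp_seq. pose proof (nsq_nonneg n (vsub (xs m) xe)). lra.
      - intros eps He. destruct (Hl (eps / 2)) as [N HN]. lra. exists N. intros m Hm.
        pose proof (HN m Hm). pose proof (HN (S m) ltac:(lia)). unfold Rdist in *.
        pose proof (Fej xe (VIe x0) m). pose proof (nsq_nonneg n (vsub (xs (S m)) xe)).
        pose proof (nsq_nonneg n (vsub (xs (S m)) (xs m))).
        rewrite Rminus_0_r, Rabs_right by lra.
        apply Rabs_def2 in H. apply Rabs_def2 in H0. lra. }
    assert (Cbar1 : cvc n (fun m => xs (S (phi m))) xbar).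
    { intros k Hk. apply (cv_squeeze _ _ (fun m => sqrt (nsq n (vsub (xs (S (phi m))) (xs (phi m)))) + Rabs (xs (phi m) k - xbar k))).
      - intros m. replace (xs (S (phi m)) k - xbar k) with ((xs (S (phi m)) k - xs (phi m) k) + (xs (phi m) k - xbar k)) by ring.
        eapply Rle_trans. apply Rabs_triang. apply Rplus_le_compat_r. apply (coord_abs_le n (vsub (xs (S (phi m))) (xs (phi m))) k Hk).
      - replace 0 with (0 + 0) by ring. apply CV_plus.
        + apply cv_sqrt0. intros; apply nsq_nonneg. apply (sub_cv phi (fun m => nsq n (vsub (xs (S m)) (xs m)))); auto.
        + apply cv_abs_diff. apply Cbar; auto. }
    assert (Vbar : VIb I ni Qi f 0 x0 xbar).
    { split; auto. intros q Hq.
      set (w := fun m => rsum I (fun i => rsum (ni i) (fun r => Ftau ni (Fgrad ni f) tau (xs (phi m)) i (xs (S (phi m))) r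
                  * (q (off ni i + r)%nat - xs (S (phi m)) (off ni i + r)%nat)))).
      apply (Rle_cv_lim (Un := fun _ => 0) (Vn := w)). intros m. apply (proj2 (VIm (phi m)) q Hq). apply cv_const.
      unfold w. apply cv_rsum. intros i Hi. apply cv_rsum. intros r Hr.
      assert (Hk : (off ni i + r < n)%nat) by (pose proof (off_ntot I ni i Hi); unfold n; lia).
      destruct (Hfbd i Hi) as [B HB].
      replace (Ftau ni (Fgrad ni f) 0 x0 i xbar r * (q (off ni i + r)%nat - xbar (off ni i + r)%nat))
        with ((pd (f i) xbar (off ni i + r)%nat + tau * (xbar (off ni i + r)%nat - xbar (off ni i + r)%nat)) * (q (off ni i + r)%nat - xbar (off ni i + r)%nat))
        by (unfold Ftau, Fgrad; ring).
      apply CV_mult; [apply CV_plus; [|apply CV_mult; [apply cv_const|apply cv_minus]]|apply cv_minus].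
      - apply (cv_squeeze _ _ (fun m => B * rsum n (fun l => Rabs (xs (S (phi m)) l - xbar l)))).
        + intros m. apply (pd_lip I ni Qi f HQcv Hfreg i (off ni i + r)%nat B); auto.
          intros w' Hw' l Hl. apply (HB w' Hw' (off ni i + r)%nat l Hk Hl).
        + replace 0 with (B * rsum n (fun _ => 0)) by (rewrite rsum_zero; auto; ring).
          apply CV_mult. apply cv_const. apply cv_rsum. intros l Hl. apply cv_abs_diff. apply Cbar1; auto.
      - apply Cbar1; auto.
      - apply Cbar; auto.
      - apply cv_const.
      - apply Cbar1; auto. }
    exists xbar. split.
    + rewrite <- (fprox0 ni f x0). apply (VI_NE I ni Qi f Hfcv Hfreg); auto; lra.
    + intros eps He. pose proof (cvc_nsq n _ _ Cbar) as Hn. destruct (Hn (eps ^ 2)) as [N HN]. nra.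
      specialize (HN N (le_n N)). unfold Rdist in HN. rewrite Rminus_0_r, Rabs_right in HN by (apply Rle_ge, nsq_nonneg).
      exists (phi N). intros m Hm. apply vnorm_lt_iff; auto.
      eapply Rle_lt_trans; [|apply HN].
      apply (decr_le (fun m => nsq n (vsub (xs m) xbar)) (fun j => Dec xbar Vbar j)). exact Hm.
Qed.
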